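(* Let $n\ge2$, $H>1$, $\mu>0$. Assume the hyperbolic Delaunay unduloid $\mathcal{D}_H(\mu)$ is not a cylinder, i.e. its profile function $\varphi$ is nonconstant. Normalize $\varphi$ so that $\varphi(0)=\alpha_-(\mu)=\min\varphi$, and let $\tau(\mu)$ be its period. Let $$a(t)=\frac{\varphi'(t)}{\cos\varphi(t)\sqrt{1+\varphi'(t)^2}},$$ regarded as a function on $\mathcal{D}_H(\mu)$. Then: 1. $(\Delta-V)a=0$; 2. $a$ vanishes exactly at the points $t=k\tau(\mu)/2$, $k\in\mathbb{Z}$; 3. $a'$ has exactly two zeros $\zeta_1(\mu),\zeta_2(\mu)$ in $[0,\tau(\mu)]$, and they satisfy $0<\zeta_1(\mu)<\tau(\mu)/2<\zeta_2(\mu)<\tau(\mu)$.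
   Context: Use the upper half-space model $\{(x_1,\dots,x_n,y):y>0\}$ of $\mathbb{H}^{n+1}$. The function $\varphi:\mathbb{R}\to(0,\pi/2)$ solves $$\mu=\frac{(\tan\varphi)^{n-1}}{\cos\varphi\sqrt{1+\varphi'^2}}-H(\tan\varphi)^n.$$ The unduloid $\mathcal{D}_H(\mu)$ is parametrized by $\Phi(t,\omega)=(e^t\sin\varphi(t)\omega,e^t\cos\varphi(t))$; it has constant normalized mean curvature $H$. The function $\varphi$ is $\tau(\mu)$-periodic and symmetric about the points $k\tau(\mu)/2$. $\Delta$ is the non-negative Laplace–Beltrami operator, and $V=\|B\|^2-n$. The function $a$ equals $\langle N,\mathcal{Y}\rangle$, where $N$ is the unit normal and $\mathcal{Y}$ is the Killing field of hyperbolic translation along the axis. *)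

(* Defs.v *)
From Stdlib Require Import Reals ZArith.
From Coquelicot Require Import Coquelicot.
Open Scope R_scope.

(* Profile of the rotational hypersurface Phi(t,w) = (e^t sin(phi t) w, e^t cos(phi t))
   in the upper half-space model: Euclidean distance to the axis r(t) and height y(t). *)
Definition prof_r (phi : R -> R) (t : R) : R := exp t * sin (phi t).
Definition prof_y (phi : R -> R) (t : R) : R := exp t * cos (phi t).

Definition speed (phi : R -> R) (t : R) : R :=
  sqrt (Derive (prof_r phi) t ^ 2 + Derive (prof_y phi) t ^ 2).

(* Induced hyperbolic metric on D_H(mu):  g = A(t)^2 dt^2 + rho(t)^2 g_{S^{n-1}},
   with A = speed / y  and  rho = r / y. *)
Definition metA (phi : R -> R) (t : R) : R := speed phi t / prof_y phi t.
Definition warp (phi : R -> R) (t : R) : R := prof_r phi t / prof_y phi t.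

(* Non-negative Laplace-Beltrami operator of g applied to a function f(t)
   depending only on t (rotationally invariant function on the hypersurface):
   Delta f = - 1/(A rho^{n-1}) d/dt ( rho^{n-1} f' / A ). *)
Definition lapLB (n : nat) (phi : R -> R) (f : R -> R) (t : R) : R :=
  - / (metA phi t * warp phi t ^ (n - 1))
    * Derive (fun s => warp phi s ^ (n - 1) * Derive f s / metA phi s) t.

(* Principal curvatures of the hypersurface of revolution in H^{n+1}
   (unit normal N_E = (-y', r')/|c'| and the conformal change kappa = y kappa_E + N_E^y):
   kappa1 along the profile, kappa2 (multiplicity n-1) along the spheres. *)
Definition kappa1 (phi : R -> R) (t : R) : R :=
  let r' := Derive (prof_r phi) t in
  let y' := Derive (prof_y phi) t in
  let r'' := Derive (Derive (prof_r phi)) t in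
  let y'' := Derive (Derive (prof_y phi)) t in
  prof_y phi t * (r' * y'' - y' * r'') / speed phi t ^ 3 + r' / speed phi t.

Definition kappa2 (phi : R -> R) (t : R) : R :=
  let r' := Derive (prof_r phi) t in
  let y' := Derive (prof_y phi) t in
  (prof_y phi t * y' / prof_r phi t + r') / speed phi t.

Definition normB2 (n : nat) (phi : R -> R) (t : R) : R :=
  kappa1 phi t ^ 2 + INR (n - 1) * kappa2 phi t ^ 2.
Definition Vpot (n : nat) (phi : R -> R) (t : R) : R := normB2 n phi t - INR n.

Definition a_fun (phi : R -> R) (t : R) : R :=
  Derive phi t / (cos (phi t) * sqrt (1 + Derive phi t ^ 2)).

Definition unduloid_eq (n : nat) (H mu : R) (phi : R -> R) : Prop :=
  forall t, mu = tan (phi t) ^ (n - 1) / (cos (phi t) * sqrt (1 + Derive phi t ^ 2))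
                 - H * tan (phi t) ^ n.

(* Main.v *)
Require Import Defs.
From Stdlib Require Import Reals ZArith Lra Lia Classical.
From Coquelicot Require Import Coquelicot.
Open Scope R_scope.


Lemma mvt2 f df a b : a < b -> (forall c, a <= c <= b -> is_derive f c (df c)) ->
  exists c, a < c < b /\ f b - f a = df c * (b - a).
Proof.
  intros Hab Hd. destruct (MVT_cor2 f df a b Hab) as [c [H1 H2]].
  - intros c Hc; apply is_derive_Reals; auto.
  - exists c; auto.
Qed.

Lemma incr_of_deriv f df a b : (forall c, a <= c <= b -> is_derive f c (df c)) ->
  (forall c, a < c < b -> 0 < df c) -> forall x y, a <= x -> x < y -> y <= b -> f x < f y.
Proof.
  intros Hd Hp x y Hx Hxy Hy.
  destruct (mvt2 f df x y) as [c [Hc E]]; auto.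
  - intros c Hc; apply Hd; lra.
  - assert (0 < df c) by (apply Hp; lra). nra.
Qed.

Lemma decr_of_deriv f df a b : (forall c, a <= c <= b -> is_derive f c (df c)) ->
  (forall c, a < c < b -> df c < 0) -> forall x y, a <= x -> x < y -> y <= b -> f y < f x.
Proof.
  intros Hd Hp x y Hx Hxy Hy.
  destruct (mvt2 f df x y) as [c [Hc E]]; auto.
  - intros c Hc; apply Hd; lra.
  - assert (df c < 0) by (apply Hp; lra). nra.
Qed.

Lemma const_of_deriv0 g l r : (forall c, l < c < r -> is_derive g c 0) ->
  forall x y, l < x < r -> l < y < r -> g x = g y.
Proof.
  intros Hd x y Hx Hy.
  destruct (Rtotal_order x y) as [H|[H|H]].
  - destruct (mvt2 g (fun _ => 0) x y) as [c [Hc E]]; auto.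
    + intros c Hc; apply Hd; lra.
    + lra.
  - subst; auto.
  - destruct (mvt2 g (fun _ => 0) y x) as [c [Hc E]]; auto.
    + intros c Hc; apply Hd; lra.
    + lra.
Qed.

Lemma cont_eps f x : continuous f x -> forall eps, 0 < eps ->
  exists d, 0 < d /\ forall y, Rabs (y - x) < d -> Rabs (f y - f x) < eps.
Proof.
  intros Hc eps Heps.
  apply continuity_pt_filterlim in Hc.
  destruct (Hc eps Heps) as [alp [Halp H]].
  exists alp; split; auto.
  intros y Hy. destruct (Req_dec y x) as [->|Hne].
  - rewrite Rminus_diag, Rabs_R0; auto.
  - apply (H y); split; [split; [exact I| auto] | exact Hy].
Qed.

Lemma ZD f d del l : 0 < del -> (forall u, d - del < u <= d -> f u = f d) ->
  is_derive f d l -> l = 0.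
Proof.
  intros Hdel Hc Hd. apply is_derive_Reals in Hd.
  destruct (Req_dec l 0) as [|Hl]; auto. exfalso.
  assert (Hpos: 0 < Rabs l) by (apply Rabs_pos_lt; auto).
  destruct (Hd (Rabs l) Hpos) as [dl Hdl].
  set (h := - Rmin del dl / 2).
  assert (Hdlp := cond_pos dl).
  assert (Hm: 0 < Rmin del dl) by (apply Rmin_pos; auto).
  assert (Hm1 := Rmin_l del dl). assert (Hm2 := Rmin_r del dl).
  assert (h <> 0) by (unfold h; lra).
  assert (Rabs h < dl) by (unfold h; rewrite Rabs_left; lra).
  specialize (Hdl h H H0).
  rewrite Hc in Hdl by (unfold h; lra).
  replace ((f d - f d) / h - l) with (- l) in Hdl by (field; auto).
  rewrite Rabs_Ropp in Hdl. lra.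
Qed.

Lemma exd_cont (f : R -> R) x : ex_derive f x -> continuous f x.
Proof. intros H. apply (ex_derive_continuous (K:=R_AbsRing) (V:=R_NormedModule)); auto. Qed.


Definition Kf (Psi : R -> R) (A B : R) (y : R) : R :=
  RInt (fun u => / sqrt (Psi u)) ((A + B) / 2) y.

Lemma cont_g Psi A B : (forall y, A < y < B -> continuous Psi y) ->
  (forall y, A < y < B -> 0 < Psi y) ->
  forall y, A < y < B -> continuous (fun u => / sqrt (Psi u)) y.
Proof.
  intros Hc Hp y Hy.
  apply continuous_Rinv_comp.
  - apply continuous_sqrt_comp, Hc; auto.
  - apply Rgt_not_eq, sqrt_lt_R0, Hp; auto.
Qed.

Lemma Kf_deriv Psi A B : A < B -> (forall y, A < y < B -> continuous Psi y) ->
  (forall y, A < y < B -> 0 < Psi y) ->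
  forall y, A < y < B -> is_derive (Kf Psi A B) y (/ sqrt (Psi y)).
Proof.
  intros HAB Hc Hp y Hy.
  apply (is_derive_RInt (fun u => / sqrt (Psi u)) (Kf Psi A B) ((A+B)/2) y).
  - set (e := Rmin (y - A) (B - y)).
    assert (He : 0 < e) by (unfold e; apply Rmin_pos; lra).
    exists (mkposreal e He). intros z Hz.
    change (Rabs (z - y) < e) in Hz.
    assert (He1 := Rmin_l (y - A) (B - y)). assert (He2 := Rmin_r (y - A) (B - y)).
    fold e in He1, He2.
    apply Rabs_def2 in Hz.
    unfold Kf. apply (RInt_correct (V:=R_CompleteNormedModule)). apply ex_RInt_continuous.
    intros w Hw. apply (cont_g Psi A B Hc Hp).
    assert (Hm1 := Rmin_l ((A+B)/2) z). assert (Hm2 := Rmin_r ((A+B)/2) z).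
    assert (HM1 := Rmax_l ((A+B)/2) z). assert (HM2 := Rmax_r ((A+B)/2) z).
    destruct (Rle_dec ((A+B)/2) z).
    + rewrite Rmin_left in Hw by lra. rewrite Rmax_right in Hw by lra. lra.
    + rewrite Rmin_right in Hw by lra. rewrite Rmax_left in Hw by lra. lra.
  - apply (cont_g Psi A B Hc Hp); auto.
Qed.

Lemma Kf_incr Psi A B : A < B -> (forall y, A < y < B -> continuous Psi y) ->
  (forall y, A < y < B -> 0 < Psi y) ->
  forall x y, A < x < B -> A < y < B -> x < y -> Kf Psi A B x < Kf Psi A B y.
Proof.
  intros HAB Hc Hp x y Hx Hy Hxy.
  apply (incr_of_deriv _ (fun y => / sqrt (Psi y)) x y); try lra.
  - intros c Hc'. apply Kf_deriv; auto; lra.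
  - intros c Hc'. apply Rinv_0_lt_compat, sqrt_lt_R0, Hp. lra.
Qed.

Lemma Kf_inj Psi A B : A < B -> (forall y, A < y < B -> continuous Psi y) ->
  (forall y, A < y < B -> 0 < Psi y) ->
  forall x y, A < x < B -> A < y < B -> Kf Psi A B x = Kf Psi A B y -> x = y.
Proof.
  intros HAB Hc Hp x y Hx Hy E.
  destruct (Rtotal_order x y) as [H|[H|H]]; auto.
  - pose proof (Kf_incr Psi A B HAB Hc Hp x y Hx Hy H); lra.
  - pose proof (Kf_incr Psi A B HAB Hc Hp y x Hy Hx H); lra.
Qed.

Definition solU (A B : R) (Psi : R -> R) (f : R -> R) : Prop :=
  (forall t, ex_derive f t) /\ (forall t, ex_derive (Derive f) t) /\
  (forall t, continuous (Derive (Derive f)) t) /\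
  (forall t, A <= f t <= B) /\ (forall t, (Derive f t)^2 = Psi (f t)) /\
  (forall t, f t = A -> 0 < Derive (Derive f) t) /\
  (forall t, f t = B -> Derive (Derive f) t < 0).

Lemma branch Psi A B f s l r : A < B -> (forall y, A < y < B -> continuous Psi y) ->
  (forall y, A < y < B -> 0 < Psi y) -> solU A B Psi f -> (s = 1 \/ s = -1) ->
  (forall t, l < t < r -> A < f t < B /\ 0 < s * Derive f t) ->
  exists c, forall t, l < t < r -> Kf Psi A B (f t) = s * t + c.
Proof.
  intros HAB Hc Hp [Hd1 [Hd2 [Hd3 [Hr [He [_ _]]]]]] Hs Hbr.
  destruct (Rlt_le_dec l r) as [Hlr|Hlr].
  2:{ exists 0; intros; lra. }
  exists (Kf Psi A B (f ((l+r)/2)) - s * ((l+r)/2)).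
  intros t Ht.
  assert (Hk: forall c, l < c < r -> is_derive (fun t => Kf Psi A B (f t) - s * t) c 0).
  { intros c Hc'. destruct (Hbr c Hc') as [Hfc Hsc].
    assert (Hsq : sqrt (Psi (f c)) = s * Derive f c).
    { rewrite <- He. rewrite <- (sqrt_pow2 (s * Derive f c)) by lra.
      f_equal. destruct Hs; subst; ring. }
    assert (H1 : is_derive (fun t => Kf Psi A B (f t)) c (Derive f c * / sqrt (Psi (f c)))).
    { apply (is_derive_comp (Kf Psi A B) f c).
      - apply Kf_deriv; auto.
      - apply Derive_correct; auto. }
    replace 0 with (Derive f c * / sqrt (Psi (f c)) - s * 1).
    2:{ rewrite Hsq. assert (Derive f c <> 0) by (destruct Hs; subst; lra).
        destruct Hs; subst; field; auto. }
    assert (H2: is_derive (fun t:R => s * t) c (s*1)) by (auto_derive; [auto|ring]).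
    apply (is_derive_minus (fun t => Kf Psi A B (f t)) (fun t => s * t) c _ (s*1)); auto. }
  pose proof (const_of_deriv0 _ l r Hk t ((l+r)/2) Ht ltac:(lra)). simpl in H. lra.
Qed.


Lemma solU_cont A B Psi f : solU A B Psi f -> forall t, continuous f t.
Proof. intros [H _] t. apply exd_cont, H. Qed.
Lemma solU_cont1 A B Psi f : solU A B Psi f -> forall t, continuous (Derive f) t.
Proof. intros [_ [H _]] t. apply exd_cont, H. Qed.
Lemma solU_d1 A B Psi f : solU A B Psi f -> forall t, is_derive f t (Derive f t).
Proof. intros [H _] t. apply Derive_correct, H. Qed.
Lemma solU_d2 A B Psi f : solU A B Psi f -> forall t, is_derive (Derive f) t (Derive (Derive f) t).
Proof. intros [_ [H _]] t. apply Derive_correct, H. Qed.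

Lemma pow2_eq0 x : x ^ 2 = 0 -> x = 0.
Proof. intros H. destruct (Req_dec x 0); auto. exfalso. assert (0 < x^2) by (apply pow_lt_0 || nra). nra. Qed.

Lemma locU_int A B Psi f1 f2 s : A < B -> (forall y, A < y < B -> continuous Psi y) ->
  (forall y, A < y < B -> 0 < Psi y) -> solU A B Psi f1 -> solU A B Psi f2 ->
  f1 s = f2 s -> Derive f1 s = Derive f2 s -> A < f1 s < B ->
  exists d, 0 < d /\ forall u, s <= u < s + d -> f1 u = f2 u.
Proof.
  intros HAB Hc Hp S1 S2 E0 E1 Hy.
  set (y := f1 s) in *. set (D := Derive f1 s) in *.
  assert (HD : D <> 0).
  { intro HD0. destruct S1 as [_ [_ [_ [_ [He _]]]]]. specialize (He s).
    fold D y in He. rewrite HD0 in He. assert (0 < Psi y) by (apply Hp; auto). simpl in He. lra. }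
  assert (Hsg : exists sg, (sg = 1 \/ sg = -1) /\ 0 < sg * D).
  { destruct (Rlt_le_dec 0 D). exists 1; split; [left; auto| lra].
    exists (-1); split; [right; auto| lra]. }
  destruct Hsg as [sg [Hsg HsD]].
  set (e := Rmin (y - A) (B - y)).
  assert (He : 0 < e) by (unfold e; apply Rmin_pos; lra).
  assert (He1 := Rmin_l (y - A) (B - y)). assert (He2 := Rmin_r (y - A) (B - y)). fold e in He1, He2.
  destruct (cont_eps f1 s (solU_cont _ _ _ _ S1 s) e He) as [d1 [Hd1 H1]].
  destruct (cont_eps f2 s (solU_cont _ _ _ _ S2 s) e He) as [d2 [Hd2 H2]].
  destruct (cont_eps (Derive f1) s (solU_cont1 _ _ _ _ S1 s) (sg*D) HsD) as [d3 [Hd3 H3]].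
  destruct (cont_eps (Derive f2) s (solU_cont1 _ _ _ _ S2 s) (sg*D) HsD) as [d4 [Hd4 H4]].
  set (d := Rmin (Rmin d1 d2) (Rmin d3 d4)).
  assert (Hd : 0 < d) by (unfold d; repeat apply Rmin_pos; auto).
  assert (Hda : d <= d1 /\ d <= d2 /\ d <= d3 /\ d <= d4).
  { unfold d, Rmin. repeat destruct Rle_dec; lra. }
  assert (Hsg2 : sg * sg = 1) by (destruct Hsg; subst; ring).
  assert (Hb1 : forall t, s - d < t < s + d -> A < f1 t < B /\ 0 < sg * Derive f1 t).
  { intros t Ht. assert (Rabs (t - s) < d) by (apply Rabs_def1; lra).
    specialize (H1 t ltac:(lra)). specialize (H3 t ltac:(lra)).
    apply Rabs_def2 in H1. apply Rabs_def2 in H3. fold y D in H1, H3.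
    split; [lra|].
    destruct Hsg; subst sg; lra. }
  assert (Hb2 : forall t, s - d < t < s + d -> A < f2 t < B /\ 0 < sg * Derive f2 t).
  { intros t Ht. assert (Rabs (t - s) < d) by (apply Rabs_def1; lra).
    specialize (H2 t ltac:(lra)). specialize (H4 t ltac:(lra)).
    apply Rabs_def2 in H2. apply Rabs_def2 in H4. rewrite <- E0 in H2. rewrite <- E1 in H4.
    fold y D in H2, H4.
    split; [lra|].
    destruct Hsg; subst sg; lra. }
  destruct (branch Psi A B f1 sg (s-d) (s+d) HAB Hc Hp S1 Hsg Hb1) as [c1 Hc1].
  destruct (branch Psi A B f2 sg (s-d) (s+d) HAB Hc Hp S2 Hsg Hb2) as [c2 Hc2].
  assert (c1 = c2).
  { pose proof (Hc1 s ltac:(lra)) as Q1. pose proof (Hc2 s ltac:(lra)) as Q2. rewrite <- E0 in Q2. change (f1 s) with y in Q1. lra. }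
  subst c2. exists d; split; auto.
  intros u Hu. apply (Kf_inj Psi A B HAB Hc Hp).
  - apply Hb1; lra.
  - apply Hb2; lra.
  - rewrite Hc1, Hc2; auto; lra.
Qed.

Lemma locU_A A B Psi f1 f2 s : A < B -> (forall y, A < y < B -> continuous Psi y) ->
  (forall y, A < y < B -> 0 < Psi y) -> Psi A = 0 -> solU A B Psi f1 -> solU A B Psi f2 ->
  f1 s = A -> f2 s = A ->
  exists d, 0 < d /\ forall u, s <= u < s + d -> f1 u = f2 u.
Proof.
  intros HAB Hc Hp HPA S1 S2 E1 E2.
  assert (Hloc : forall f, solU A B Psi f -> f s = A -> exists d, 0 < d /\
     forall u, s < u < s + d -> A < f u < B /\ 0 < Derive f u).
  { intros f Sf Ef.
    assert (HD : Derive f s = 0).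
    { apply pow2_eq0. destruct Sf as [_ [_ [_ [_ [He _]]]]]. rewrite He, Ef; auto. }
    assert (Hpp : 0 < Derive (Derive f) s).
    { destruct Sf as [_ [_ [_ [_ [_ [H _]]]]]]. apply H; auto. }
    destruct Sf as [Sa [Sb [Sc [Sd [Se [Sf1 Sg]]]]]].
    destruct (cont_eps _ s (Sc s) _ Hpp) as [d1 [Hd1 H1]].
    destruct (cont_eps f s (exd_cont _ _ (Sa s)) (B - A) ltac:(lra)) as [d2 [Hd2 H2]].
    exists (Rmin d1 d2). split; [apply Rmin_pos; auto|].
    assert (Hm1 := Rmin_l d1 d2). assert (Hm2 := Rmin_r d1 d2).
    assert (Hpos2 : forall c, s <= c < s + Rmin d1 d2 -> 0 < Derive (Derive f) c).
    { intros c Hc'. assert (Rabs (c - s) < d1) by (apply Rabs_def1; lra).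
      specialize (H1 c H). apply Rabs_def2 in H1. lra. }
    assert (Hpos1 : forall u, s < u < s + Rmin d1 d2 -> 0 < Derive f u).
    { intros u Hu. rewrite <- HD.
      apply (incr_of_deriv (Derive f) (Derive (Derive f)) s u); try lra.
      - intros c Hc'. apply Derive_correct, Sb.
      - intros c Hc'. apply Hpos2; lra. }
    intros u Hu. split; [split|]; auto.
    - rewrite <- Ef. apply (incr_of_deriv f (Derive f) s u); try lra.
      + intros c Hc'. apply Derive_correct, Sa.
      + intros c Hc'. apply Hpos1; lra.
    - assert (Rabs (u - s) < d2) by (apply Rabs_def1; lra).
      specialize (H2 u H). apply Rabs_def2 in H2. lra. }
  destruct (Hloc f1 S1 E1) as [d1 [Hd1 Hb1]].
  destruct (Hloc f2 S2 E2) as [d2 [Hd2 Hb2]].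
  set (d := Rmin d1 d2).
  assert (Hd : 0 < d) by (apply Rmin_pos; auto).
  assert (Hm1 := Rmin_l d1 d2). assert (Hm2 := Rmin_r d1 d2). fold d in Hm1, Hm2.
  assert (Hb1' : forall t, s < t < s + d -> A < f1 t < B /\ 0 < 1 * Derive f1 t).
  { intros t Ht. destruct (Hb1 t ltac:(lra)). split; auto; lra. }
  assert (Hb2' : forall t, s < t < s + d -> A < f2 t < B /\ 0 < 1 * Derive f2 t).
  { intros t Ht. destruct (Hb2 t ltac:(lra)). split; auto; lra. }
  destruct (branch Psi A B f1 1 s (s+d) HAB Hc Hp S1 (or_introl eq_refl) Hb1') as [c1 Hc1].
  destruct (branch Psi A B f2 1 s (s+d) HAB Hc Hp S2 (or_introl eq_refl) Hb2') as [c2 Hc2].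
  assert (Hbound : forall f c, solU A B Psi f -> f s = A ->
     (forall t, s < t < s + d -> A < f t < B /\ 0 < 1 * Derive f t) ->
     (forall t, s < t < s + d -> Kf Psi A B (f t) = 1 * t + c) ->
     forall y', A < y' < B -> c + s <= Kf Psi A B y').
  { intros f c Sf Ef Hbf Hcf y' Hy'.
    destruct (cont_eps f s (solU_cont _ _ _ _ Sf s) (y' - A) ltac:(lra)) as [d3 [Hd3 H3]].
    set (u := s + Rmin d d3 / 2).
    assert (Hm3 := Rmin_l d d3). assert (Hm4 := Rmin_r d d3).
    assert (Hm5 : 0 < Rmin d d3) by (apply Rmin_pos; auto).
    assert (Hu : s < u < s + d) by (unfold u; lra).
    assert (Hfu : f u < y').
    { assert (Rabs (u - s) < d3) by (apply Rabs_def1; unfold u; lra).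
      specialize (H3 u H). apply Rabs_def2 in H3. lra. }
    pose proof (Kf_incr Psi A B HAB Hc Hp (f u) y' (proj1 (Hbf u Hu)) Hy' Hfu).
    rewrite Hcf in H; auto. lra. }
  assert (c1 = c2).
  { destruct (Rtotal_order c1 c2) as [Hlt|[Heq|Hgt]]; auto; exfalso.
    - set (u := s + Rmin d (c2 - c1) / 2).
      assert (Hm3 := Rmin_l d (c2 - c1)). assert (Hm4 := Rmin_r d (c2 - c1)).
      assert (Hm5 : 0 < Rmin d (c2 - c1)) by (apply Rmin_pos; lra).
      assert (Hu : s < u < s + d) by (unfold u; lra).
      pose proof (Hbound f2 c2 S2 E2 Hb2' Hc2 (f1 u) (proj1 (Hb1' u Hu))).
      rewrite Hc1 in H; auto. unfold u in H. lra.
    - set (u := s + Rmin d (c1 - c2) / 2).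
      assert (Hm3 := Rmin_l d (c1 - c2)). assert (Hm4 := Rmin_r d (c1 - c2)).
      assert (Hm5 : 0 < Rmin d (c1 - c2)) by (apply Rmin_pos; lra).
      assert (Hu : s < u < s + d) by (unfold u; lra).
      pose proof (Hbound f1 c1 S1 E1 Hb1' Hc1 (f2 u) (proj1 (Hb2' u Hu))).
      rewrite Hc2 in H; auto. unfold u in H. lra. }
  subst c2. exists d; split; auto.
  intros u Hu. destruct (Req_dec u s) as [->|Hne]; [congruence|].
  apply (Kf_inj Psi A B HAB Hc Hp).
  - apply Hb1'; lra.
  - apply Hb2'; lra.
  - rewrite Hc1, Hc2; auto; lra.
Qed.

Lemma locU_B A B Psi f1 f2 s : A < B -> (forall y, A < y < B -> continuous Psi y) ->
  (forall y, A < y < B -> 0 < Psi y) -> Psi B = 0 -> solU A B Psi f1 -> solU A B Psi f2 ->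
  f1 s = B -> f2 s = B ->
  exists d, 0 < d /\ forall u, s <= u < s + d -> f1 u = f2 u.
Proof.
  intros HAB Hc Hp HPB S1 S2 E1 E2.
  assert (Hloc : forall f, solU A B Psi f -> f s = B -> exists d, 0 < d /\
     forall u, s < u < s + d -> A < f u < B /\ Derive f u < 0).
  { intros f Sf Ef.
    assert (HD : Derive f s = 0).
    { apply pow2_eq0. destruct Sf as [_ [_ [_ [_ [He _]]]]]. rewrite He, Ef; auto. }
    assert (Hpp : Derive (Derive f) s < 0).
    { destruct Sf as [_ [_ [_ [_ [_ [_ H]]]]]]. apply H; auto. }
    destruct Sf as [Sa [Sb [Sc [Sd [Se [Sf1 Sg]]]]]].
    destruct (cont_eps _ s (Sc s) (- Derive (Derive f) s) ltac:(lra)) as [d1 [Hd1 H1]].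
    destruct (cont_eps f s (exd_cont _ _ (Sa s)) (B - A) ltac:(lra)) as [d2 [Hd2 H2]].
    exists (Rmin d1 d2). split; [apply Rmin_pos; auto|].
    assert (Hm1 := Rmin_l d1 d2). assert (Hm2 := Rmin_r d1 d2).
    assert (Hpos2 : forall c, s <= c < s + Rmin d1 d2 -> Derive (Derive f) c < 0).
    { intros c Hc'. assert (Rabs (c - s) < d1) by (apply Rabs_def1; lra).
      specialize (H1 c H). apply Rabs_def2 in H1. lra. }
    assert (Hpos1 : forall u, s < u < s + Rmin d1 d2 -> Derive f u < 0).
    { intros u Hu. rewrite <- HD.
      apply (decr_of_deriv (Derive f) (Derive (Derive f)) s u); try lra.
      - intros c Hc'. apply Derive_correct, Sb.
      - intros c Hc'. apply Hpos2; lra. }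
    intros u Hu. split; [split|]; auto.
    - assert (Rabs (u - s) < d2) by (apply Rabs_def1; lra).
      specialize (H2 u H). apply Rabs_def2 in H2. lra.
    - rewrite <- Ef. apply (decr_of_deriv f (Derive f) s u); try lra.
      + intros c Hc'. apply Derive_correct, Sa.
      + intros c Hc'. apply Hpos1; lra. }
  destruct (Hloc f1 S1 E1) as [d1 [Hd1 Hb1]].
  destruct (Hloc f2 S2 E2) as [d2 [Hd2 Hb2]].
  set (d := Rmin d1 d2).
  assert (Hd : 0 < d) by (apply Rmin_pos; auto).
  assert (Hm1 := Rmin_l d1 d2). assert (Hm2 := Rmin_r d1 d2). fold d in Hm1, Hm2.
  assert (Hb1' : forall t, s < t < s + d -> A < f1 t < B /\ 0 < -1 * Derive f1 t).
  { intros t Ht. destruct (Hb1 t ltac:(lra)). split; auto; lra. }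
  assert (Hb2' : forall t, s < t < s + d -> A < f2 t < B /\ 0 < -1 * Derive f2 t).
  { intros t Ht. destruct (Hb2 t ltac:(lra)). split; auto; lra. }
  destruct (branch Psi A B f1 (-1) s (s+d) HAB Hc Hp S1 (or_intror eq_refl) Hb1') as [c1 Hc1].
  destruct (branch Psi A B f2 (-1) s (s+d) HAB Hc Hp S2 (or_intror eq_refl) Hb2') as [c2 Hc2].
  assert (Hbound : forall f c, solU A B Psi f -> f s = B ->
     (forall t, s < t < s + d -> A < f t < B /\ 0 < -1 * Derive f t) ->
     (forall t, s < t < s + d -> Kf Psi A B (f t) = -1 * t + c) ->
     forall y', A < y' < B -> Kf Psi A B y' <= c - s).
  { intros f c Sf Ef Hbf Hcf y' Hy'.
    destruct (cont_eps f s (solU_cont _ _ _ _ Sf s) (B - y') ltac:(lra)) as [d3 [Hd3 H3]].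
    set (u := s + Rmin d d3 / 2).
    assert (Hm3 := Rmin_l d d3). assert (Hm4 := Rmin_r d d3).
    assert (Hm5 : 0 < Rmin d d3) by (apply Rmin_pos; auto).
    assert (Hu : s < u < s + d) by (unfold u; lra).
    assert (Hfu : y' < f u).
    { assert (Rabs (u - s) < d3) by (apply Rabs_def1; unfold u; lra).
      specialize (H3 u H). apply Rabs_def2 in H3. lra. }
    pose proof (Kf_incr Psi A B HAB Hc Hp y' (f u) Hy' (proj1 (Hbf u Hu)) Hfu).
    rewrite Hcf in H; auto. lra. }
  assert (c1 = c2).
  { destruct (Rtotal_order c1 c2) as [Hlt|[Heq|Hgt]]; auto; exfalso.
    - set (u := s + Rmin d (c2 - c1) / 2).
      assert (Hm3 := Rmin_l d (c2 - c1)). assert (Hm4 := Rmin_r d (c2 - c1)).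
      assert (Hm5 : 0 < Rmin d (c2 - c1)) by (apply Rmin_pos; lra).
      assert (Hu : s < u < s + d) by (unfold u; lra).
      pose proof (Hbound f1 c1 S1 E1 Hb1' Hc1 (f2 u) (proj1 (Hb2' u Hu))).
      rewrite Hc2 in H; auto. unfold u in H. lra.
    - set (u := s + Rmin d (c1 - c2) / 2).
      assert (Hm3 := Rmin_l d (c1 - c2)). assert (Hm4 := Rmin_r d (c1 - c2)).
      assert (Hm5 : 0 < Rmin d (c1 - c2)) by (apply Rmin_pos; lra).
      assert (Hu : s < u < s + d) by (unfold u; lra).
      pose proof (Hbound f2 c2 S2 E2 Hb2' Hc2 (f1 u) (proj1 (Hb1' u Hu))).
      rewrite Hc1 in H; auto. unfold u in H. lra. }
  subst c2. exists d; split; auto.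
  intros u Hu. destruct (Req_dec u s) as [->|Hne]; [congruence|].
  apply (Kf_inj Psi A B HAB Hc Hp).
  - apply Hb1'; lra.
  - apply Hb2'; lra.
  - rewrite Hc1, Hc2; auto; lra.
Qed.

Lemma locU A B Psi f1 f2 s : A < B -> (forall y, A < y < B -> continuous Psi y) ->
  (forall y, A < y < B -> 0 < Psi y) -> Psi A = 0 -> Psi B = 0 ->
  solU A B Psi f1 -> solU A B Psi f2 ->
  f1 s = f2 s -> Derive f1 s = Derive f2 s ->
  exists d, 0 < d /\ forall u, s <= u < s + d -> f1 u = f2 u.
Proof.
  intros HAB Hc Hp HPA HPB S1 S2 E0 E1.
  assert (Hr := proj1 (proj2 (proj2 (proj2 S1))) s).
  destruct (Req_dec (f1 s) A) as [HA|HA].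
  - apply (locU_A A B Psi f1 f2 s); auto; congruence.
  - destruct (Req_dec (f1 s) B) as [HB|HB].
    + apply (locU_B A B Psi f1 f2 s); auto; congruence.
    + apply (locU_int A B Psi f1 f2 s); auto. lra.
Qed.

Lemma globU A B Psi f1 f2 t0 : A < B -> (forall y, A < y < B -> continuous Psi y) ->
  (forall y, A < y < B -> 0 < Psi y) -> Psi A = 0 -> Psi B = 0 ->
  solU A B Psi f1 -> solU A B Psi f2 ->
  f1 t0 = f2 t0 -> Derive f1 t0 = Derive f2 t0 ->
  forall t, t0 <= t -> f1 t = f2 t.
Proof.
  intros HAB Hc Hp HPA HPB S1 S2 E0 E1 t Ht.
  destruct (Req_dec (f1 t) (f2 t)) as [|Hne]; auto. exfalso.
  set (S := fun s => t0 <= s /\ forall u, t0 <= u <= s -> f1 u = f2 u).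
  assert (Hbd : bound S).
  { exists t. intros s [Hs1 Hs2]. destruct (Rle_lt_dec s t); auto. exfalso. apply Hne, Hs2; lra. }
  assert (HS0 : S t0) by (split; [lra| intros u Hu; replace u with t0 by lra; auto]).
  destruct (completeness S Hbd (ex_intro _ t0 HS0)) as [s [Hub Hlub]].
  assert (Hs0 : t0 <= s) by (apply Hub; auto).
  assert (Hbelow : forall u, t0 <= u < s -> f1 u = f2 u).
  { intros u Hu. destruct (classic (exists s', S s' /\ u <= s')) as [[s' [[_ Hs'] Hus']]|Hn].
    - apply Hs'; lra.
    - exfalso. assert (s <= u); [|lra]. apply Hlub. intros s' Hs'.
      destruct (Rle_lt_dec s' u); auto. exfalso; apply Hn; exists s'; split; auto; lra. }
  assert (Hg : forall u, continuous (fun x => f1 x - f2 x) u).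
  { intros u. apply (continuous_minus (V:=R_NormedModule)); eapply solU_cont; eauto. }
  assert (Es : f1 s = f2 s).
  { destruct (Req_dec s t0) as [->|Hst]; auto.
    destruct (Req_dec (f1 s - f2 s) 0) as [|Hn]; [lra|]. exfalso.
    destruct (cont_eps _ s (Hg s) (Rabs (f1 s - f2 s)) (Rabs_pos_lt _ Hn)) as [d [Hd Hd']].
    set (u := Rmax t0 (s - d/2)).
    assert (Hu1 := Rmax_l t0 (s - d/2)). assert (Hu2 := Rmax_r t0 (s - d/2)).
    assert (u < s) by (unfold u, Rmax; destruct Rle_dec; lra).
    assert (Rabs (u - s) < d) by (apply Rabs_def1; fold u in Hu1, Hu2; lra).
    specialize (Hd' u H0). rewrite Hbelow in Hd' by (fold u in Hu1; lra).
    replace (f2 u - f2 u - (f1 s - f2 s)) with (- (f1 s - f2 s)) in Hd' by ring.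
    rewrite Rabs_Ropp in Hd'. lra. }
  assert (Ed : Derive f1 s = Derive f2 s).
  { destruct (Req_dec s t0) as [->|Hst]; auto.
    assert (Hdg : is_derive (fun x => f1 x - f2 x) s (Derive f1 s - Derive f2 s)).
    { apply (is_derive_minus (V:=R_NormedModule)); eapply solU_d1; eauto. }
    pose proof (ZD (fun x => f1 x - f2 x) s (s - t0) (Derive f1 s - Derive f2 s) ltac:(lra)) as HZ.
    assert (Derive f1 s - Derive f2 s = 0); [|lra].
    apply HZ; auto. intros u Hu. simpl.
    destruct (Req_dec u s) as [->|]; [ring|]. rewrite Es, (Hbelow u) by lra. ring. }
  destruct (locU A B Psi f1 f2 s HAB Hc Hp HPA HPB S1 S2 Es Ed) as [d [Hd Hloc]].
  assert (S (s + d/2)).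
  { split; [lra|]. intros u Hu. destruct (Rlt_le_dec u s).
    - apply Hbelow; lra.
    - apply Hloc; lra. }
  pose proof (Hub _ H). lra.
Qed.


Lemma E_zero (f Ef : R -> R) : (forall t, ex_derive f t) -> (forall t, ex_derive (Derive f) t) ->
  (forall t, continuous Ef t) -> (forall t, Derive f t * Ef t = 0) ->
  (forall t, Derive f t = 0 -> Derive (Derive f) t = 0 -> Ef t <> 0) ->
  (forall t0, exists t1, t0 < t1 /\ f t1 <> f t0) -> forall t, Ef t = 0.
Proof.
  intros Hd1 Hd2 Hc Hprod Hnz Hnc t0.
  destruct (Req_dec (Ef t0) 0) as [|Hne]; auto. exfalso.
  assert (Hloc : forall x, Ef x <> 0 -> exists d, 0 < d /\ forall u, Rabs (u - x) < d -> Derive f u = 0).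
  { intros x Hx. destruct (cont_eps Ef x (Hc x) (Rabs (Ef x)) (Rabs_pos_lt _ Hx)) as [d [Hd H]].
    exists d; split; auto. intros u Hu. specialize (H u Hu).
    assert (Ef u <> 0).
    { intro E. rewrite E in H. replace (0 - Ef x) with (- Ef x) in H by ring. rewrite Rabs_Ropp in H. lra. }
    specialize (Hprod u). destruct (Rmult_integral _ _ Hprod); auto; contradiction. }
  destruct (Hnc t0) as [t1 [Ht1 Hft1]].
  set (S := fun s => t0 <= s /\ forall u, t0 <= u <= s -> Derive f u = 0).
  assert (Hbd : bound S).
  { exists t1. intros s [Hs1 Hs2]. destruct (Rle_lt_dec s t1); auto. exfalso. apply Hft1.
    destruct (mvt2 f (Derive f) t0 t1 Ht1) as [c [Hc' E]].
    - intros c Hc'. apply Derive_correct, Hd1.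
    - rewrite Hs2 in E by lra. lra. }
  destruct (Hloc t0 Hne) as [d0 [Hd0 Hl0]].
  assert (HS1 : S (t0 + d0/2)).
  { split; [lra|]. intros u Hu. apply Hl0. apply Rabs_def1; lra. }
  destruct (completeness S Hbd (ex_intro _ _ HS1)) as [s [Hub Hlub]].
  assert (Hs0 : t0 + d0/2 <= s) by (apply Hub; auto).
  assert (Hbelow : forall u, t0 <= u < s -> Derive f u = 0).
  { intros u Hu. destruct (classic (exists s', S s' /\ u <= s')) as [[s' [[_ Hs'] Hus']]|Hn].
    - apply Hs'; lra.
    - exfalso. assert (s <= u); [|lra]. apply Hlub. intros s' Hs'.
      destruct (Rle_lt_dec s' u); auto. exfalso; apply Hn; exists s'; split; auto; lra. }
  assert (Es : Derive f s = 0).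
  { destruct (Req_dec (Derive f s) 0) as [|Hn]; auto. exfalso.
    destruct (cont_eps _ s (exd_cont _ _ (Hd2 s)) (Rabs (Derive f s)) (Rabs_pos_lt _ Hn)) as [d [Hd Hd']].
    set (u := Rmax t0 (s - d/2)).
    assert (Hu1 := Rmax_l t0 (s - d/2)). assert (Hu2 := Rmax_r t0 (s - d/2)).
    assert (u < s) by (unfold u, Rmax; destruct Rle_dec; lra).
    assert (Rabs (u - s) < d) by (apply Rabs_def1; fold u in Hu1, Hu2; lra).
    specialize (Hd' u H0). rewrite Hbelow in Hd' by (fold u in Hu1; lra).
    replace (0 - Derive f s) with (- Derive f s) in Hd' by ring.
    rewrite Rabs_Ropp in Hd'. lra. }
  assert (Es2 : Derive (Derive f) s = 0).
  { apply (ZD (Derive f) s (s - t0)); [lra| |apply Derive_correct, Hd2].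
    intros u Hu. rewrite Es. destruct (Req_dec u s) as [->|]; auto. apply Hbelow; lra. }
  destruct (Hloc s (Hnz s Es Es2)) as [d [Hd Hl]].
  assert (S (s + d/2)).
  { split; [lra|]. intros u Hu. destruct (Rlt_le_dec u s).
    - apply Hbelow; lra.
    - apply Hl. apply Rabs_def1; lra. }
  pose proof (Hub _ H). lra.
Qed.


Definition vv (k : nat) (mu H x : R) := mu / x ^ (S k) + H * x.
Definition vv1 (k : nat) (mu H x : R) := H - INR (S k) * mu / x ^ (S (S k)).
Definition vv2 (k : nat) (mu H x : R) := INR (S (S k)) * INR (S k) * mu / x ^ (S (S (S k))).
Definition WW (k : nat) (mu H x : R) := 1 + x ^ 2 - (vv k mu H x) ^ 2.
Definition WW1 (k : nat) (mu H x : R) := 2 * x - 2 * vv k mu H x * vv1 k mu H x.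
Definition WW2 (k : nat) (mu H x : R) := 2 - 2 * (vv1 k mu H x) ^ 2 - 2 * vv k mu H x * vv2 k mu H x.

Lemma vv_d k mu H x : 0 < x -> is_derive (vv k mu H) x (vv1 k mu H x).
Proof.
  intros Hx. unfold vv, vv1. auto_derive.
  - change (x * x ^ k) with (x ^ S k). apply pow_nonzero; lra.
  - assert (x ^ k <> 0) by (apply pow_nonzero; lra).
    change (match k with 0%nat => 1 | S _ => INR k + 1 end) with (INR (S k)).
    simpl. field. split; auto; lra.
Qed.

Lemma vv1_d k mu H x : 0 < x -> is_derive (vv1 k mu H) x (vv2 k mu H x).
Proof.
  intros Hx. unfold vv1, vv2. auto_derive.
  - change (x * (x * x ^ k)) with (x ^ S (S k)). apply pow_nonzero; lra.
  - assert (x ^ k <> 0) by (apply pow_nonzero; lra).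
    change (match k with 0%nat => 1 | S _ => INR k + 1 end) with (INR (S k)).
    change (match S k with 0%nat => 1 | S _ => INR (S k) + 1 end) with (INR (S (S k))).
    simpl. field. split; auto; lra.
Qed.

Lemma WW_d k mu H x : 0 < x -> is_derive (WW k mu H) x (WW1 k mu H x).
Proof.
  intros Hx. unfold WW, WW1.
  pose proof (vv_d k mu H x Hx) as Hd.
  auto_derive.
  - exists (vv1 k mu H x); auto.
  - replace (Derive (fun x0 => vv k mu H x0) x) with (vv1 k mu H x)
      by (symmetry; apply is_derive_unique; auto). ring.
Qed.

Lemma WW1_d k mu H x : 0 < x -> is_derive (WW1 k mu H) x (WW2 k mu H x).
Proof.
  intros Hx. unfold WW1, WW2.
  pose proof (vv_d k mu H x Hx) as Hd.
  pose proof (vv1_d k mu H x Hx) as Hd1.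
  auto_derive.
  - split; [exists (vv1 k mu H x); auto | split; auto; exists (vv2 k mu H x); auto].
  - replace (Derive (fun x0 => vv k mu H x0) x) with (vv1 k mu H x)
      by (symmetry; apply is_derive_unique; auto).
    replace (Derive (fun x0 => vv1 k mu H x0) x) with (vv2 k mu H x)
      by (symmetry; apply is_derive_unique; auto). ring.
Qed.

Lemma WW2_neg k mu H x : 0 < x -> 1 < H -> 0 < mu -> WW2 k mu H x < 0.
Proof.
  intros Hx HH Hmu.
  set (y := mu / x ^ (S (S k))).
  assert (Hxk : 0 < x ^ k) by (apply pow_lt; lra).
  assert (Hy : 0 < y) by (unfold y; apply Rdiv_lt_0_compat; auto; apply pow_lt; lra).
  assert (E1 : vv k mu H x = x * (y + H)) by (unfold vv, y; simpl; field; split; lra).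
  assert (E2 : vv1 k mu H x = H - INR (S k) * y) by (unfold vv1, y; simpl; field; split; lra).
  assert (E3 : vv2 k mu H x = INR (S (S k)) * INR (S k) * y / x) by (unfold vv2, y; simpl; field; split; lra).
  unfold WW2. rewrite E1, E2, E3.
  rewrite !S_INR. assert (Hk := pos_INR k).
  replace (2 - 2 * (H - (INR k + 1) * y) ^ 2 - 2 * (x * (y + H)) * ((INR k + 1 + 1) * (INR k + 1) * y / x))
    with (2 - 2 * (H - (INR k + 1) * y) ^ 2 - 2 * (y + H) * ((INR k + 1 + 1) * (INR k + 1) * y))
    by (field; lra).
  assert (0 <= INR k * y) by nra. assert (0 <= INR k * y * y) by nra.
  assert (0 <= INR k * INR k * y * y) by nra. assert (0 <= INR k * H * y) by nra.
  assert (0 <= INR k * INR k * H * y) by nra.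
  nra.
Qed.

Lemma WW1_decr k mu H x y : 1 < H -> 0 < mu -> 0 < x -> x < y -> WW1 k mu H y < WW1 k mu H x.
Proof.
  intros HH Hmu Hx Hxy.
  apply (decr_of_deriv (WW1 k mu H) (WW2 k mu H) x y); try lra.
  - intros c Hc. apply WW1_d; lra.
  - intros c Hc. apply WW2_neg; lra.
Qed.

Lemma WW_cont k mu H x : 0 < x -> continuity_pt (WW k mu H) x.
Proof. intros Hx. apply continuity_pt_filterlim. apply exd_cont. eexists; apply WW_d; auto. Qed.

Lemma WW1_cont k mu H x : 0 < x -> continuity_pt (WW1 k mu H) x.
Proof. intros Hx. apply continuity_pt_filterlim. apply exd_cont. eexists; apply WW1_d; auto. Qed.

Lemma WW_mvt k mu H a b : 1 < H -> 0 < mu -> 0 < a -> a < b ->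
  exists c, a < c < b /\ WW k mu H b - WW k mu H a = WW1 k mu H c * (b - a).
Proof.
  intros HH Hmu Ha Hab. apply mvt2; auto. intros c Hc. apply WW_d; lra.
Qed.

Lemma WW_pos_between k mu H a b x : 1 < H -> 0 < mu -> 0 < a -> a < x < b ->
  WW k mu H a = 0 -> WW k mu H b = 0 -> 0 < WW k mu H x.
Proof.
  intros HH Hmu Ha Hx Ea Eb.
  destruct (WW_mvt k mu H a x HH Hmu Ha ltac:(lra)) as [c1 [Hc1 E1]].
  destruct (WW_mvt k mu H x b HH Hmu ltac:(lra) ltac:(lra)) as [c2 [Hc2 E2]].
  pose proof (WW1_decr k mu H c1 c2 HH Hmu ltac:(lra) ltac:(lra)).
  destruct (Rle_lt_dec (WW k mu H x) 0); auto.
  assert (WW1 k mu H c1 * (x - a) <= 0) by lra.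
  assert (WW1 k mu H c1 <= 0).
  { destruct (Rle_lt_dec (WW1 k mu H c1) 0); auto. nra. }
  assert (0 <= WW1 k mu H c2 * (b - x)) by lra.
  assert (0 <= WW1 k mu H c2).
  { destruct (Rle_lt_dec 0 (WW1 k mu H c2)); auto. nra. }
  lra.
Qed.

Lemma WW_neg_right k mu H a b x : 1 < H -> 0 < mu -> 0 < a -> a < b -> b < x ->
  WW k mu H a = 0 -> WW k mu H b = 0 -> WW k mu H x < 0.
Proof.
  intros HH Hmu Ha Hab Hx Ea Eb.
  destruct (WW_mvt k mu H a b HH Hmu Ha Hab) as [c1 [Hc1 E1]].
  destruct (WW_mvt k mu H b x HH Hmu ltac:(lra) ltac:(lra)) as [c2 [Hc2 E2]].
  pose proof (WW1_decr k mu H c1 c2 HH Hmu ltac:(lra) ltac:(lra)).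
  assert (WW1 k mu H c1 = 0).
  { rewrite Ea, Eb in E1. assert (b - a <> 0) by lra.
    destruct (Rmult_integral (WW1 k mu H c1) (b - a)); auto; lra. }
  assert (WW1 k mu H c2 < 0) by lra.
  assert (WW1 k mu H c2 * (x - b) < 0) by (apply Rmult_neg_pos; lra). lra.
Qed.

Lemma WW1_pos_left k mu H a x : 1 < H -> 0 < mu -> 0 < a -> a < x ->
  WW k mu H a = 0 -> 0 <= WW k mu H x -> 0 < WW1 k mu H a.
Proof.
  intros HH Hmu Ha Hx Ea Ex.
  destruct (WW_mvt k mu H a x HH Hmu Ha Hx) as [c [Hc E]].
  pose proof (WW1_decr k mu H a c HH Hmu Ha ltac:(lra)).
  assert (0 <= WW1 k mu H c).
  { destruct (Rle_lt_dec 0 (WW1 k mu H c)); auto. nra. }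
  lra.
Qed.

Lemma WW1_neg_right k mu H a b : 1 < H -> 0 < mu -> 0 < a -> a < b ->
  WW k mu H a = 0 -> WW k mu H b = 0 -> WW1 k mu H b < 0.
Proof.
  intros HH Hmu Ha Hab Ea Eb.
  destruct (WW_mvt k mu H a b HH Hmu Ha Hab) as [c [Hc E]].
  pose proof (WW1_decr k mu H c b HH Hmu ltac:(lra) ltac:(lra)).
  assert (WW1 k mu H c = 0).
  { rewrite Ea, Eb in E. assert (b - a <> 0) by lra.
    destruct (Rmult_integral (WW1 k mu H c) (b - a)); auto; lra. }
  lra.
Qed.

Lemma WW_upper k mu H x : 1 < H -> 0 < mu -> 0 < x -> WW k mu H x <= 1 + x^2 - H^2 * x^2.
Proof.
  intros HH Hmu Hx. unfold WW.
  assert (0 < mu / x ^ S k) by (apply Rdiv_lt_0_compat; auto; apply pow_lt; lra).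
  assert (H * x <= vv k mu H x) by (unfold vv; lra).
  assert (0 < H * x) by nra.
  nra.
Qed.

Lemma WW_root_exists k mu H x1 : 1 < H -> 0 < mu -> 0 < x1 -> 0 <= WW k mu H x1 ->
  exists M, x1 <= M /\ WW k mu H M = 0.
Proof.
  intros HH Hmu Hx1 W1.
  destruct (Req_dec (WW k mu H x1) 0) as [E|NE]. { exists x1; split; [lra|auto]. }
  set (x0 := x1 + 1 + / (H - 1)).
  assert (Hinv : 0 < / (H - 1)) by (apply Rinv_0_lt_compat; lra).
  assert (Hx0 : (H - 1) * x0 > 1).
  { unfold x0. replace ((H - 1) * (x1 + 1 + / (H - 1))) with ((H-1)*(x1+1) + 1) by (field; lra). nra. }
  assert (W0 : WW k mu H x0 < 0).
  { pose proof (WW_upper k mu H x0 HH Hmu ltac:(unfold x0; lra)).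
    assert ((H + 1) * x0 > 1) by (unfold x0 in *; nra).
    assert ((H - 1) * x0 * ((H + 1) * x0) > 1) by nra. nra. }
  destruct (Ranalysis5.IVT_interv (fun x => - WW k mu H x) x1 x0) as [M [HM EM]].
  - intros a Ha. apply continuity_pt_opp. apply WW_cont. lra.
  - unfold x0; lra.
  - lra.
  - lra.
  - exists M. split; [lra|]. lra.
Qed.


Lemma trig_basic ph : 0 < ph < PI / 2 -> 0 < cos ph /\ 0 < sin ph /\ 0 < tan ph /\
  cos ph ^ 2 * (1 + tan ph ^ 2) = 1 /\ sin ph = tan ph * cos ph.
Proof.
  intros Hp.
  assert (Hc : 0 < cos ph) by (apply cos_gt_0; lra).
  assert (Hs : 0 < sin ph) by (apply sin_gt_0; lra).
  assert (Ht : 0 < tan ph) by (unfold tan; apply Rdiv_lt_0_compat; auto).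
  repeat split; auto.
  - unfold tan. pose proof (sin2_cos2 ph). unfold Rsqr in H. field_simplify; [|lra]. nra.
  - unfold tan. field. lra.
Qed.

Lemma vv_pos k mu H x : 0 < mu -> 0 < H -> 0 < x -> 0 < vv k mu H x.
Proof.
  intros. unfold vv. assert (0 < mu / x ^ S k) by (apply Rdiv_lt_0_compat; auto; apply pow_lt; lra).
  nra.
Qed.

Lemma ode_alg k mu H ph p : 0 < mu -> 0 < H -> 0 < ph < PI / 2 ->
  mu = tan ph ^ S k / (cos ph * sqrt (1 + p ^ 2)) - H * tan ph ^ S (S k) ->
  cos ph * sqrt (1 + p ^ 2) = / vv k mu H (tan ph) /\
  p ^ 2 * (vv k mu H (tan ph)) ^ 2 = WW k mu H (tan ph).
Proof.
  intros Hmu HH Hp E.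
  destruct (trig_basic ph Hp) as [Hc [Hs [Ht [Hct Hst]]]].
  set (T := tan ph) in *. set (c := cos ph) in *.
  assert (HQ : 0 < sqrt (1 + p^2)) by (apply sqrt_lt_R0; nra).
  set (Q := sqrt (1 + p^2)) in *.
  assert (HQ2 : Q ^ 2 = 1 + p ^ 2) by (unfold Q; apply pow2_sqrt; nra).
  assert (HTk : 0 < T ^ k) by (apply pow_lt; auto).
  assert (Hv : 0 < vv k mu H T) by (apply vv_pos; auto).
  assert (E1 : c * Q = / vv k mu H T).
  { unfold vv. simpl in E |- *.
    assert (mu + H * (T * (T * T ^ k)) = T * T ^ k / (c * Q)) by lra.
    apply (Rmult_eq_reg_r (mu / (T * T ^ k) + H * T)).
    2:{ apply Rgt_not_eq. unfold vv in Hv. simpl in Hv. lra. }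
    rewrite Rinv_l by (unfold vv in Hv; simpl in Hv; lra).
    replace (mu / (T * T ^ k) + H * T) with ((mu + H * (T * (T * T ^ k))) / (T * T^k)) by (field; nra).
    rewrite H0. field. split; nra. }
  split; auto.
  unfold WW. 
  assert (c ^ 2 * Q ^ 2 * vv k mu H T ^ 2 = 1).
  { replace (c ^ 2 * Q ^ 2 * vv k mu H T ^ 2) with ((c * Q * vv k mu H T) ^ 2) by ring.
    rewrite E1. field. lra. }
  rewrite HQ2 in H0.
  assert (c ^ 2 <> 0) by nra.
  apply (Rmult_eq_reg_l (c ^ 2)); auto.
  replace (c ^ 2 * (1 + T ^ 2 - vv k mu H T ^ 2)) with (c^2 * (1 + T^2) - c^2 * vv k mu H T ^ 2) by ring.
  rewrite Hct. nra.
Qed.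


Definition Hyp (k : nat) (H mu : R) (phi : R -> R) (tau : R) : Prop :=
  1 < H /\ 0 < mu /\ (forall (j : nat) (t : R), ex_derive_n phi j t) /\
  (forall t, 0 < phi t < PI / 2) /\
  (forall t, mu = tan (phi t) ^ S k / (cos (phi t) * sqrt (1 + Derive phi t ^ 2))
                 - H * tan (phi t) ^ S (S k)) /\
  0 < tau /\ (forall s, 0 < s < tau -> exists t, phi (t + s) <> phi t) /\
  (forall (j : Z) (t : R), phi (IZR j * tau - t) = phi t) /\
  (exists t1 t2, phi t1 <> phi t2) /\ (forall t, phi 0 <= phi t).

Ltac eta_fix := repeat match goal with
  | |- context [Derive (fun x : R => ?f x) ?y] => change (Derive (fun x : R => f x) y) with (Derive f y)
  end.

Lemma Derive_eta (f : R -> R) x : Derive (fun y => f y) x = Derive f x.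
Proof. reflexivity. Qed.

Lemma D_vv k mu H y : 0 < y -> Derive (fun x => vv k mu H x) y = vv1 k mu H y.
Proof. intros; apply is_derive_unique, vv_d; auto. Qed.
Lemma D_vv1 k mu H y : 0 < y -> Derive (fun x => vv1 k mu H x) y = vv2 k mu H y.
Proof. intros; apply is_derive_unique, vv1_d; auto. Qed.
Lemma D_WW k mu H y : 0 < y -> Derive (fun x => WW k mu H x) y = WW1 k mu H y.
Proof. intros; apply is_derive_unique, WW_d; auto. Qed.
Lemma D_WW1 k mu H y : 0 < y -> Derive (fun x => WW1 k mu H x) y = WW2 k mu H y.
Proof. intros; apply is_derive_unique, WW1_d; auto. Qed.
Lemma D_tan y : cos y <> 0 -> Derive (fun x => tan x) y = tan y ^ 2 + 1.
Proof. intros; apply is_derive_unique, is_derive_tan; auto. Qed.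
Lemma ex_vv k mu H y : 0 < y -> ex_derive (fun x => vv k mu H x) y.
Proof. intros; eexists; apply vv_d; auto. Qed.
Lemma ex_vv1 k mu H y : 0 < y -> ex_derive (fun x => vv1 k mu H x) y.
Proof. intros; eexists; apply vv1_d; auto. Qed.
Lemma ex_WW k mu H y : 0 < y -> ex_derive (fun x => WW k mu H x) y.
Proof. intros; eexists; apply WW_d; auto. Qed.
Lemma ex_WW1 k mu H y : 0 < y -> ex_derive (fun x => WW1 k mu H x) y.
Proof. intros; eexists; apply WW1_d; auto. Qed.
Lemma ex_tan y : cos y <> 0 -> ex_derive (fun x => tan x) y.
Proof. intros; eexists; apply is_derive_tan; auto. Qed.


Lemma hyp_d1 k H mu phi tau : Hyp k H mu phi tau -> forall t, ex_derive phi t.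
Proof. intros [_ [_ [Hd _]]] t. exact (Hd 1%nat t). Qed.
Lemma hyp_d2 k H mu phi tau : Hyp k H mu phi tau -> forall t, ex_derive (Derive phi) t.
Proof. intros [_ [_ [Hd _]]] t. exact (Hd 2%nat t). Qed.
Lemma hyp_d3 k H mu phi tau : Hyp k H mu phi tau -> forall t, ex_derive (Derive (Derive phi)) t.
Proof. intros [_ [_ [Hd _]]] t. exact (Hd 3%nat t). Qed.

Lemma refl_derive (f : R -> R) c : (forall t, ex_derive f t) -> (forall t, f (c - t) = f t) ->
  forall t, Derive f t = - Derive f (c - t).
Proof.
  intros Hd Hs t.
  assert (E : Derive (fun t => f (c - t)) t = - Derive f (c - t)).
  { apply is_derive_unique.
    replace (- Derive f (c - t)) with (scal (-1) (Derive f (c - t))) by (unfold scal; simpl; unfold mult; simpl; ring).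
    apply (is_derive_comp f (fun t => c - t) t).
    - apply Derive_correct, Hd.
    - auto_derive; [auto|ring]. }
  rewrite <- E. apply Derive_ext. intros; rewrite Hs; auto.
Qed.

Lemma hyp_even k H mu phi tau : Hyp k H mu phi tau -> forall t, phi (- t) = phi t.
Proof.
  intros Hy t. destruct Hy as [_ [_ [_ [_ [_ [_ [_ [Hs _]]]]]]]].
  rewrite <- (Hs 0%Z t). f_equal. simpl. ring.
Qed.

Lemma hyp_per k H mu phi tau : Hyp k H mu phi tau -> forall (j : Z) t, phi (t + IZR j * tau) = phi t.
Proof.
  intros Hy j t. pose proof (hyp_even _ _ _ _ _ Hy t) as Ev.
  destruct Hy as [_ [_ [_ [_ [_ [_ [_ [Hs _]]]]]]]].
  rewrite <- Ev, <- (Hs j (-t)). f_equal. ring.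
Qed.

Lemma hyp_P0 k H mu phi tau : Hyp k H mu phi tau -> forall (j : Z), Derive phi (IZR j * tau / 2) = 0.
Proof.
  intros Hy j. pose proof (hyp_d1 _ _ _ _ _ Hy) as Hd.
  destruct Hy as [_ [_ [_ [_ [_ [_ [_ [Hs _]]]]]]]].
  pose proof (refl_derive phi (IZR j * tau) Hd (Hs j) (IZR j * tau / 2)).
  replace (IZR j * tau - IZR j * tau / 2) with (IZR j * tau / 2) in H0 by field. lra.
Qed.

Lemma hyp_alg k H mu phi tau : Hyp k H mu phi tau -> forall t,
  cos (phi t) * sqrt (1 + Derive phi t ^ 2) = / vv k mu H (tan (phi t)) /\
  Derive phi t ^ 2 * (vv k mu H (tan (phi t))) ^ 2 = WW k mu H (tan (phi t)).
Proof.
  intros [HH [Hmu [_ [Hr [Hode _]]]]] t. apply ode_alg; auto; lra.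
Qed.

Lemma hyp_afun k H mu phi tau : Hyp k H mu phi tau -> forall t,
  a_fun phi t = Derive phi t * vv k mu H (tan (phi t)).
Proof.
  intros Hy t. destruct (hyp_alg _ _ _ _ _ Hy t) as [E _].
  destruct Hy as [HH [Hmu [_ [Hr _]]]].
  unfold a_fun. rewrite E. assert (0 < vv k mu H (tan (phi t))).
  { apply vv_pos; try lra. destruct (trig_basic _ (Hr t)) as [_ [_ [? _]]]; auto. }
  field. lra.
Qed.

Definition Efun k H mu (phi : R -> R) t :=
  2 * Derive (Derive phi) t * vv k mu H (tan (phi t)) ^ 2
  + 2 * Derive phi t ^ 2 * vv k mu H (tan (phi t)) * vv1 k mu H (tan (phi t)) * (1 + tan (phi t) ^ 2)
  - WW1 k mu H (tan (phi t)) * (1 + tan (phi t) ^ 2).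

Lemma hyp_basic k H mu phi tau : Hyp k H mu phi tau -> forall t,
  0 < cos (phi t) /\ 0 < sin (phi t) /\ 0 < tan (phi t) /\
  cos (phi t) ^ 2 * (1 + tan (phi t) ^ 2) = 1 /\ sin (phi t) = tan (phi t) * cos (phi t).
Proof. intros [_ [_ [_ [Hr _]]]] t. apply trig_basic; auto. Qed.

Lemma hyp_PE k H mu phi tau : Hyp k H mu phi tau -> forall t, Derive phi t * Efun k H mu phi t = 0.
Proof.
  intros Hy t.
  pose proof (hyp_d1 _ _ _ _ _ Hy) as D1. pose proof (hyp_d2 _ _ _ _ _ Hy) as D2.
  destruct (hyp_basic _ _ _ _ _ Hy t) as [Hc [Hs [Ht _]]].
  assert (Hcn : cos (phi t) <> 0) by lra.
  set (X := tan (phi t)) in *.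
  assert (E1 : is_derive (fun t => Derive phi t ^ 2 * vv k mu H (tan (phi t)) ^ 2) t
     (2 * Derive phi t * Derive (Derive phi) t * vv k mu H X ^ 2 +
      Derive phi t ^ 2 * 2 * vv k mu H X * vv1 k mu H X * ((X^2 + 1) * Derive phi t))).
  { auto_derive.
    - repeat split; auto. apply ex_vv; auto. apply ex_tan; auto.
    - rewrite !Derive_eta, D_vv, D_tan by auto. fold X. eta_fix. ring. }
  assert (E2 : is_derive (fun t => WW k mu H (tan (phi t))) t
     (WW1 k mu H X * ((X^2 + 1) * Derive phi t))).
  { auto_derive.
    - repeat split; auto. apply ex_WW; auto. apply ex_tan; auto.
    - rewrite !Derive_eta, D_WW, D_tan by auto. fold X. eta_fix. ring. }
  assert (Eq : 2 * Derive phi t * Derive (Derive phi) t * vv k mu H X ^ 2 +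
      Derive phi t ^ 2 * 2 * vv k mu H X * vv1 k mu H X * ((X^2 + 1) * Derive phi t) =
      WW1 k mu H X * ((X^2 + 1) * Derive phi t)).
  { rewrite <- (is_derive_unique _ _ _ E1), <- (is_derive_unique _ _ _ E2).
    apply Derive_ext. intros u. apply (hyp_alg _ _ _ _ _ Hy u). }
  unfold Efun. fold X. rewrite <- Rminus_diag_eq with (r1 := WW1 k mu H X * ((X^2 + 1) * Derive phi t)) (r2 := WW1 k mu H X * ((X^2 + 1) * Derive phi t)) by auto. rewrite <- Eq at 1. ring.
Qed.


Lemma tan_lt x y : 0 < x < PI/2 -> 0 < y < PI/2 -> x < y -> tan x < tan y.
Proof. intros. apply tan_increasing; lra. Qed.

Lemma tan_le x y : 0 < x < PI/2 -> 0 < y < PI/2 -> x <= y -> tan x <= tan y.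
Proof. intros. destruct (Req_dec x y); [subst; lra|]. left; apply tan_lt; auto; lra. Qed.

Lemma tan_lt_inv x y : 0 < x < PI/2 -> 0 < y < PI/2 -> tan x < tan y -> x < y.
Proof. intros. destruct (Rlt_le_dec x y); auto. pose proof (tan_le y x H0 H r). lra. Qed.

Lemma hyp_struct k H mu phi tau : Hyp k H mu phi tau -> exists M,
  tan (phi 0) < M /\ WW k mu H (tan (phi 0)) = 0 /\ WW k mu H M = 0 /\
  (forall t, tan (phi 0) <= tan (phi t) <= M) /\
  0 < WW1 k mu H (tan (phi 0)) /\ WW1 k mu H M < 0 /\
  (forall t, Derive phi t = 0 <-> tan (phi t) = tan (phi 0) \/ tan (phi t) = M).
Proof.
  intros Hy.
  pose proof (hyp_P0 _ _ _ _ _ Hy 0%Z) as P0.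
  replace (IZR 0 * tau / 2) with 0 in P0 by (simpl; field).
  pose proof (hyp_alg _ _ _ _ _ Hy) as Alg.
  destruct Hy as [HH [Hmu [_ [Hr [_ [_ [_ [_ [[t1 [t2 Hne]] Hmin]]]]]]]]].
  set (m := tan (phi 0)).
  assert (Hm : 0 < m) by (destruct (trig_basic _ (Hr 0)) as [_ [_ [? _]]]; auto).
  assert (Wm : WW k mu H m = 0).
  { destruct (Alg 0) as [_ E]. rewrite P0 in E. fold m in E. rewrite <- E. ring. }
  assert (Wge : forall t, 0 <= WW k mu H (tan (phi t))).
  { intros t. destruct (Alg t) as [_ E]. rewrite <- E. nra. }
  assert (Xge : forall t, m <= tan (phi t)).
  { intros t. apply tan_le; auto. }
  assert (Hex : exists t, m < tan (phi t)).
  { destruct (Req_dec (phi t1) (phi 0)) as [E|E].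
    - exists t2. apply tan_lt; auto. pose proof (Hmin t2). destruct H0; auto. lra.
    - exists t1. apply tan_lt; auto. pose proof (Hmin t1). destruct H0; auto. lra. }
  destruct Hex as [t3 Ht3].
  assert (W1m : 0 < WW1 k mu H m) by (apply (WW1_pos_left k mu H m (tan (phi t3))); auto).
  destruct (WW_root_exists k mu H (tan (phi t3)) HH Hmu ltac:(lra) (Wge t3)) as [M [HM WM]].
  exists M.
  assert (Xle : forall t, tan (phi t) <= M).
  { intros t. destruct (Rle_lt_dec (tan (phi t)) M); auto.
    pose proof (WW_neg_right k mu H m M (tan (phi t)) HH Hmu Hm ltac:(lra) r Wm WM).
    pose proof (Wge t). lra. }
  split; [lra|]. split; auto. split; auto. split; [intros t; split; auto|].
  split; auto. split. { apply (WW1_neg_right k mu H m M); auto; lra. }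
  intros t. split.
  - intros Pt. destruct (Alg t) as [_ E]. rewrite Pt in E.
    assert (WW k mu H (tan (phi t)) = 0) by (rewrite <- E; ring).
    destruct (Req_dec (tan (phi t)) m) as [|Hn1]; [left; auto|].
    destruct (Req_dec (tan (phi t)) M) as [|Hn2]; [right; auto|].
    exfalso. pose proof (WW_pos_between k mu H m M (tan (phi t)) HH Hmu Hm).
    pose proof (Xge t). pose proof (Xle t).
    assert (0 < WW k mu H (tan (phi t))) by (apply H1; auto; lra). lra.
  - intros HX. destruct (Alg t) as [_ E].
    assert (WW k mu H (tan (phi t)) = 0) by (destruct HX as [HX|HX]; rewrite HX; auto).
    rewrite H0 in E.
    assert (0 < vv k mu H (tan (phi t))) by (apply vv_pos; lra).
    apply pow2_eq0. apply (Rmult_eq_reg_r (vv k mu H (tan (phi t)) ^ 2)); [|nra]. lra.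
Qed.

Lemma hyp_nonconst k H mu phi tau : Hyp k H mu phi tau ->
  forall t0, exists t1, t0 < t1 /\ phi t1 <> phi t0.
Proof.
  intros Hy t0. pose proof (hyp_per _ _ _ _ _ Hy) as Per.
  destruct Hy as [_ [_ [_ [_ [_ [Htau [_ [_ [[t1 [t2 Hne]] _]]]]]]]]].
  assert (Hex : exists t', phi t' <> phi t0).
  { destruct (Req_dec (phi t1) (phi t0)); [exists t2|exists t1]; auto. congruence. }
  destruct Hex as [t' Ht'].
  destruct (floor_ex ((t0 - t') / tau)) as [j Hj].
  exists (t' + IZR (j + 1) * tau). split.
  - rewrite plus_IZR. assert ((t0 - t') / tau * tau = t0 - t') by (field; lra).
    assert ((t0 - t') / tau < IZR j + 1) by lra.
    assert ((t0 - t') / tau * tau < (IZR j + 1) * tau) by (apply Rmult_lt_compat_r; lra). lra.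
  - rewrite Per. auto.
Qed.

Ltac exd_solve D1 D2 D3 :=
  repeat match goal with
  | |- _ /\ _ => split
  | |- True => exact I
  | |- ex_derive (fun x : R => vv _ _ _ x) _ => apply ex_vv; auto
  | |- ex_derive (fun x : R => vv1 _ _ _ x) _ => apply ex_vv1; auto
  | |- ex_derive (fun x : R => WW _ _ _ x) _ => apply ex_WW; auto
  | |- ex_derive (fun x : R => WW1 _ _ _ x) _ => apply ex_WW1; auto
  | |- ex_derive (fun x : R => tan x) _ => apply ex_tan; lra
  | |- ex_derive (fun x : R => Derive (Derive _) x) _ => apply D3
  | |- ex_derive (fun x : R => Derive _ x) _ => apply D2
  | |- ex_derive (fun x : R => _ x) _ => apply D1
  end.

Lemma hyp_Ecorr k H mu phi tau : Hyp k H mu phi tau -> forall t, ex_derive (Efun k H mu phi) t.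
Proof.
  intros Hy t.
  pose proof (hyp_d1 _ _ _ _ _ Hy) as D1. pose proof (hyp_d2 _ _ _ _ _ Hy) as D2.
  pose proof (hyp_d3 _ _ _ _ _ Hy) as D3.
  destruct (hyp_basic _ _ _ _ _ Hy t) as [Hc [Hs [Ht _]]].
  unfold Efun. auto_derive.
  exd_solve D1 D2 D3.
Qed.

Lemma hyp_E0 k H mu phi tau : Hyp k H mu phi tau -> forall t, Efun k H mu phi t = 0.
Proof.
  intros Hy.
  destruct (hyp_struct _ _ _ _ _ Hy) as [M [HmM [Wm [WM [Rg [W1m [W1M Hz]]]]]]].
  apply (E_zero phi (Efun k H mu phi)).
  - apply (hyp_d1 _ _ _ _ _ Hy).
  - apply (hyp_d2 _ _ _ _ _ Hy).
  - intros t; apply exd_cont, (hyp_Ecorr _ _ _ _ _ Hy).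
  - apply (hyp_PE _ _ _ _ _ Hy).
  - intros t P0 P1. unfold Efun. rewrite P0, P1.
    destruct (proj1 (Hz t) P0) as [E|E]; rewrite E.
    + match goal with |- ?e <> 0 => replace e with (- (WW1 k mu H (tan (phi 0)) * (1 + tan (phi 0)^2))) by ring end.
      assert (0 < 1 + tan (phi 0) ^ 2) by (pose proof (pow2_ge_0 (tan (phi 0))); lra).
      assert (0 < WW1 k mu H (tan (phi 0)) * (1 + tan (phi 0)^2)) by (apply Rmult_lt_0_compat; auto). lra.
    + match goal with |- ?e <> 0 => replace e with (- (WW1 k mu H M * (1 + M^2))) by ring end.
      assert (0 < 1 + M ^ 2) by (pose proof (pow2_ge_0 M); lra).
      assert (0 < - WW1 k mu H M * (1 + M^2)) by (apply Rmult_lt_0_compat; lra). lra.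
  - apply (hyp_nonconst _ _ _ _ _ Hy).
Qed.

Lemma hyp_da k H mu phi tau : Hyp k H mu phi tau -> forall t,
  is_derive (a_fun phi) t ((1 + tan (phi t) ^ 2) * WW1 k mu H (tan (phi t)) / (2 * vv k mu H (tan (phi t)))).
Proof.
  intros Hy t.
  pose proof (hyp_d1 _ _ _ _ _ Hy) as D1. pose proof (hyp_d2 _ _ _ _ _ Hy) as D2.
  pose proof (hyp_d3 _ _ _ _ _ Hy) as D3.
  destruct (hyp_basic _ _ _ _ _ Hy t) as [Hc [Hs [Ht _]]].
  pose proof (hyp_E0 _ _ _ _ _ Hy t) as E0. unfold Efun in E0.
  assert (Hv : 0 < vv k mu H (tan (phi t))) by (destruct Hy as [? [? _]]; apply vv_pos; lra).
  apply (is_derive_ext (fun t => Derive phi t * vv k mu H (tan (phi t)))).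
  { intros u. symmetry. apply (hyp_afun _ _ _ _ _ Hy). }
  auto_derive.
  - exd_solve D1 D2 D3.
  - rewrite !Derive_eta, D_vv, D_tan by lra. eta_fix.
    set (X := tan (phi t)) in *. set (V := vv k mu H X) in *.
    assert (EP : Derive (Derive phi) t = (WW1 k mu H X * (1 + X^2) - 2 * Derive phi t ^ 2 * V * vv1 k mu H X * (1 + X^2)) / (2 * V^2)).
    { assert (E0' : Derive (Derive phi) t * (2 * V^2) = WW1 k mu H X * (1 + X^2) - 2 * Derive phi t ^ 2 * V * vv1 k mu H X * (1 + X^2)).
      { replace (Derive (Derive phi) t * (2 * V^2)) with (2 * Derive (Derive phi) t * V^2) by ring. lra. }
      rewrite <- E0'. field. lra. }
    rewrite EP. field. lra.
Qed.

Lemma hyp_Da k H mu phi tau : Hyp k H mu phi tau -> forall t,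
  Derive (a_fun phi) t = (1 + tan (phi t) ^ 2) * WW1 k mu H (tan (phi t)) / (2 * vv k mu H (tan (phi t))).
Proof. intros Hy t. apply is_derive_unique, (hyp_da _ _ _ _ _ Hy). Qed.


Definition PsiF k mu H y := WW k mu H (tan y) / (vv k mu H (tan y)) ^ 2.

Lemma refl_is_derive (g : R -> R) c t : ex_derive g (c - t) ->
  is_derive (fun t => g (c - t)) t (- Derive g (c - t)).
Proof.
  intros Hd.
  replace (- Derive g (c - t)) with (scal (-1) (Derive g (c - t))) by (unfold scal; simpl; unfold mult; simpl; ring).
  apply (is_derive_comp g (fun t => c - t) t).
  - apply Derive_correct, Hd.
  - auto_derive; [auto|ring].
Qed.

Lemma solU_refl A B Psi f c : solU A B Psi f -> solU A B Psi (fun t => f (c - t)).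
Proof.
  intros [Sa [Sb [Sc [Sd [Se [Sf Sg]]]]]].
  assert (E1 : forall t, Derive (fun t => f (c - t)) t = - Derive f (c - t)).
  { intros t. apply is_derive_unique, refl_is_derive, Sa. }
  assert (E2 : forall t, is_derive (Derive (fun t => f (c - t))) t (Derive (Derive f) (c - t))).
  { intros t. apply (is_derive_ext (fun t => - Derive f (c - t))).
    { intros u; rewrite E1; auto. }
    replace (Derive (Derive f) (c - t)) with (- - Derive (Derive f) (c - t)) by ring.
    apply (is_derive_opp (fun t => Derive f (c - t))). apply refl_is_derive, Sb. }
  assert (E3 : forall t, Derive (Derive (fun t => f (c - t))) t = Derive (Derive f) (c - t)).
  { intros t; apply is_derive_unique, E2. }
  split; [|split; [|split; [|split; [|split; [|split]]]]].
  - intros t. eexists. apply refl_is_derive, Sa.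
  - intros t. eexists. apply E2.
  - intros t. apply (continuous_ext (fun t => Derive (Derive f) (c - t))).
    { intros u; rewrite E3; auto. }
    apply (continuous_comp (fun t => c - t) (Derive (Derive f))).
    + apply exd_cont. eexists. auto_derive; [auto|reflexivity].
    + apply Sc.
  - intros t; apply Sd.
  - intros t. rewrite E1. rewrite <- Se. ring.
  - intros t Ht. rewrite E3. apply Sf; auto.
  - intros t Ht. rewrite E3. apply Sg; auto.
Qed.

Lemma PsiF_cont k mu H y : 0 < mu -> 0 < H -> 0 < y < PI/2 -> continuous (PsiF k mu H) y.
Proof.
  intros Hmu HH Hy. destruct (trig_basic y Hy) as [Hc [_ [Ht _]]].
  assert (0 < vv k mu H (tan y)) by (apply vv_pos; auto).
  apply exd_cont. unfold PsiF. auto_derive.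
  repeat match goal with
  | |- _ /\ _ => split
  | |- True => exact I
  | |- ex_derive (fun x : R => vv _ _ _ x) _ => apply ex_vv; auto
  | |- ex_derive (fun x : R => WW _ _ _ x) _ => apply ex_WW; auto
  | |- ex_derive (fun x : R => tan x) _ => apply ex_tan; lra
  | |- _ <> 0 => apply Rgt_not_eq; rewrite Rmult_1_r; apply Rmult_lt_0_compat; auto
  end.
Qed.

Lemma hyp_refl k H mu phi tau : Hyp k H mu phi tau -> forall t1, Derive phi t1 = 0 ->
  forall t, phi (2 * t1 - t) = phi t.
Proof.
  intros Hy t1 P1.
  destruct (hyp_struct _ _ _ _ _ Hy) as [M [HmM [Wm [WM [Rg [W1m [W1M Hz]]]]]]].
  pose proof (hyp_E0 _ _ _ _ _ Hy) as E0.
  pose proof (hyp_alg _ _ _ _ _ Hy) as Alg.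
  pose proof (hyp_d1 _ _ _ _ _ Hy) as D1. pose proof (hyp_d2 _ _ _ _ _ Hy) as D2.
  pose proof (hyp_d3 _ _ _ _ _ Hy) as D3.
  pose proof (hyp_basic _ _ _ _ _ Hy) as Bas.
  destruct Hy as [HH [Hmu [_ [Hr [_ [_ [_ [_ [_ Hmin]]]]]]]]].
  assert (HM0 : 0 < M) by (destruct (Bas 0) as [_ [_ [? _]]]; lra).
  set (A := phi 0). set (B := atan M).
  change (phi 0) with A in Wm, Rg, W1m, Hz, HmM.
  assert (HB : 0 < B < PI / 2).
  { unfold B. split; [rewrite <- atan_0; apply atan_increasing; auto|].
    destruct (atan_bound M); lra. }
  assert (tB : tan B = M) by (unfold B; apply tan_atan).
  assert (HA0 : 0 < A < PI / 2) by apply Hr.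
  assert (HAB : A < B) by (apply tan_lt_inv; [apply Hr | exact HB | rewrite tB; exact HmM]).
  assert (Hc : forall y, A < y < B -> continuous (PsiF k mu H) y).
  { intros y Hy. apply PsiF_cont; auto; lra. }
  assert (Hp : forall y, A < y < B -> 0 < PsiF k mu H y).
  { intros y Hy. unfold PsiF.
    assert (Hy' : 0 < y < PI/2) by lra.
    destruct (trig_basic y Hy') as [_ [_ [Ht _]]].
    assert (0 < vv k mu H (tan y)) by (apply vv_pos; auto; lra).
    apply Rdiv_lt_0_compat; [|apply pow_lt; auto].
    apply (WW_pos_between k mu H (tan A) M); auto.
    - destruct (Bas 0) as [_ [_ [? _]]]; auto.
    - split; [apply tan_lt|rewrite <- tB; apply tan_lt]; auto; lra. }
  assert (HPA : PsiF k mu H A = 0) by (unfold PsiF; rewrite Wm; unfold Rdiv; ring).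
  assert (HPB : PsiF k mu H B = 0) by (unfold PsiF; rewrite tB, WM; unfold Rdiv; ring).
  assert (S1 : solU A B (PsiF k mu H) phi).
  { split; [|split; [|split; [|split; [|split; [|split]]]]].
    - apply D1.
    - apply D2.
    - intros t. apply exd_cont, D3.
    - intros t. split; [apply Hmin|].
      destruct (Rle_lt_dec (phi t) B) as [|Hlt]; auto. exfalso.
      pose proof (tan_lt B (phi t) HB (Hr t) Hlt). rewrite tB in H0. pose proof (Rg t). lra.
    - intros t. destruct (Alg t) as [_ E]. unfold PsiF. rewrite <- E.
      destruct (Bas t) as [_ [_ [Ht _]]].
      assert (0 < vv k mu H (tan (phi t))) by (apply vv_pos; auto; lra).
      field. lra.
    - intros t Ht. assert (P0 : Derive phi t = 0) by (apply Hz; left; rewrite Ht; auto).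
      specialize (E0 t). unfold Efun in E0. rewrite P0 in E0. rewrite Ht in E0.
      destruct (Bas 0) as [_ [_ [Ht0 _]]].
      assert (0 < vv k mu H (tan A)) by (apply vv_pos; auto; lra).
      assert (0 < WW1 k mu H (tan A) * (1 + tan A ^ 2)) by (apply Rmult_lt_0_compat; auto; nra).
      assert (0 < 2 * Derive (Derive phi) t * vv k mu H (tan A) ^ 2) by (fold A in E0; lra).
      assert (0 < vv k mu H (tan A) ^ 2) by (apply pow_lt; auto).
      destruct (Rle_lt_dec (Derive (Derive phi) t) 0); auto.
      assert (2 * Derive (Derive phi) t * vv k mu H (tan A) ^ 2 <= 0); [|lra].
      assert (0 <= - Derive (Derive phi) t * vv k mu H (tan A) ^ 2) by (apply Rmult_le_pos; lra). lra.
    - intros t Ht. assert (P0 : Derive phi t = 0) by (apply Hz; right; rewrite Ht; auto).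
      specialize (E0 t). unfold Efun in E0. rewrite P0 in E0. rewrite Ht, tB in E0.
      assert (0 < vv k mu H M) by (apply vv_pos; auto; lra).
      assert (0 < - WW1 k mu H M * (1 + M ^ 2)) by (apply Rmult_lt_0_compat; nra).
      assert (0 < vv k mu H M ^ 2) by (apply pow_lt; auto).
      destruct (Rle_lt_dec 0 (Derive (Derive phi) t)); auto.
      assert (0 <= Derive (Derive phi) t * vv k mu H M ^ 2) by (apply Rmult_le_pos; lra). lra.
      }
  assert (S2 := solU_refl _ _ _ _ (2 * t1) S1).
  assert (Hfw : forall t, t1 <= t -> phi t = phi (2 * t1 - t)).
  { apply (globU A B (PsiF k mu H) phi (fun t => phi (2 * t1 - t)) t1); auto.
    - f_equal; ring.
    - symmetry. etransitivity. apply (is_derive_unique _ _ _ (refl_is_derive phi (2 * t1) t1 (D1 _))).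
      replace (2 * t1 - t1) with t1 by ring. rewrite P1. ring. }
  intros t. destruct (Rle_lt_dec t1 t).
  - symmetry; apply Hfw; auto.
  - rewrite Hfw by lra. f_equal; ring.
Qed.

Lemma hyp_zeros k H mu phi tau : Hyp k H mu phi tau -> forall t,
  Derive phi t = 0 <-> exists j : Z, t = IZR j * tau / 2.
Proof.
  intros Hy t. split.
  - intros P0.
    pose proof (hyp_refl _ _ _ _ _ Hy t P0) as Rf.
    pose proof (hyp_even _ _ _ _ _ Hy) as Ev.
    pose proof (hyp_per _ _ _ _ _ Hy) as Per.
    destruct Hy as [_ [_ [_ [_ [_ [Htau [Hmin _]]]]]]].
    assert (P2 : forall u, phi (u + 2 * t) = phi u).
    { intros u. transitivity (phi (- u)); [|apply Ev]. rewrite <- (Rf (- u)). f_equal. ring. }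
    destruct (floor_ex (2 * t / tau)) as [j Hj].
    exists j.
    set (s := 2 * t - IZR j * tau).
    assert (Hs0 : 0 <= s).
    { unfold s. assert (Q : IZR j * tau <= 2 * t / tau * tau) by (apply Rmult_le_compat_r; lra).
      replace (2 * t / tau * tau) with (2 * t) in Q by (field; lra). lra. }
    assert (Hs1 : s < tau).
    { unfold s. assert (Q : 2 * t / tau * tau < (IZR j + 1) * tau) by (apply Rmult_lt_compat_r; lra).
      replace (2 * t / tau * tau) with (2 * t) in Q by (field; lra). lra. }
    destruct (Req_dec s 0) as [E|E].
    + unfold s in E. lra.
    + exfalso. destruct (Hmin s ltac:(lra)) as [u Hu]. apply Hu.
      unfold s. replace (u + (2 * t - IZR j * tau)) with ((u + 2 * t) + IZR (- j) * tau)
        by (rewrite opp_IZR; ring).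
      rewrite Per, P2. auto.
  - intros [j ->]. apply (hyp_P0 _ _ _ _ _ Hy).
Qed.


Lemma cont_glob (f : R -> R) : (forall t, ex_derive f t) -> continuity f.
Proof. intros Hd x. apply continuity_pt_filterlim, exd_cont, Hd. Qed.

Lemma hyp_part3 k H mu phi tau : Hyp k H mu phi tau ->
  exists z1 z2 : R,
        0 < z1 < tau / 2 /\ tau / 2 < z2 < tau /\
        Derive (a_fun phi) z1 = 0 /\ Derive (a_fun phi) z2 = 0 /\
        (forall z, 0 <= z <= tau -> Derive (a_fun phi) z = 0 -> z = z1 \/ z = z2).
Proof.
  intros Hy.
  destruct (hyp_struct _ _ _ _ _ Hy) as [M [HmM [Wm [WM [Rg [W1m [W1M Hz]]]]]]].
  pose proof (hyp_zeros _ _ _ _ _ Hy) as Zer.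
  pose proof (hyp_Da _ _ _ _ _ Hy) as Da.
  pose proof (hyp_d1 _ _ _ _ _ Hy) as D1. pose proof (hyp_d2 _ _ _ _ _ Hy) as D2.
  pose proof (hyp_d3 _ _ _ _ _ Hy) as D3.
  pose proof (hyp_basic _ _ _ _ _ Hy) as Bas.
  pose proof (hyp_P0 _ _ _ _ _ Hy 1%Z) as Ph.
  destruct Hy as [HH [Hmu [_ [Hr [_ [Htau [_ [Hsym [_ Hmin]]]]]]]]].
  replace (IZR 1 * tau / 2) with (tau / 2) in Ph by (simpl; field).
  set (g := fun t => WW1 k mu H (tan (phi t))).
  assert (Dag : forall t, Derive (a_fun phi) t = 0 <-> g t = 0).
  { intros t. rewrite Da. unfold g. destruct (Bas t) as [_ [_ [Ht _]]].
    assert (0 < vv k mu H (tan (phi t))) by (apply vv_pos; lra).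
    assert (0 < 1 + tan (phi t) ^ 2) by (pose proof (pow2_ge_0 (tan (phi t))); lra).
    split; intros E.
    - unfold Rdiv in E. apply Rmult_integral in E. destruct E as [E|E].
      + apply Rmult_integral in E. destruct E; [lra|auto].
      + exfalso. apply Rinv_neq_0_compat in E; auto. lra.
    - rewrite E. unfold Rdiv. ring. }
  assert (Pne : forall t, 0 < t < tau / 2 -> Derive phi t <> 0).
  { intros t Ht E. apply Zer in E. destruct E as [j ->].
    assert (Q1 : 0 < IZR j) by (apply (Rmult_lt_reg_r (tau / 2)); lra).
    assert (Q2 : IZR j < 1) by (apply (Rmult_lt_reg_r (tau / 2)); lra).
    apply lt_IZR in Q1. apply lt_IZR in Q2. lia. }
  assert (Pc := cont_glob _ D2).
  assert (Ppos : forall t, 0 < t < tau / 2 -> 0 < Derive phi t).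
  { intros t Ht. destruct (Rlt_le_dec 0 (Derive phi t)) as [|Hle]; auto. exfalso.
    assert (Hneg : Derive phi t < 0) by (pose proof (Pne t Ht); lra).
    assert (Hall : forall u, 0 < u <= t -> Derive phi u < 0).
    { intros u Hu. destruct (Rlt_le_dec (Derive phi u) 0) as [|Hge]; auto. exfalso.
      assert (Hgt : 0 < Derive phi u) by (destruct (Req_dec (Derive phi u) 0) as [E|E]; [exfalso; apply (Pne u); [lra|exact E]|lra]).
      destruct (IVT_gen (Derive phi) u t 0 Pc) as [x [Hx Ex]].
      - rewrite Rmin_right, Rmax_left by lra. lra.
      - rewrite Rmin_left in Hx by lra. rewrite Rmax_right in Hx by lra.
        apply (Pne x); auto; lra. }
    pose proof (decr_of_deriv phi (Derive phi) 0 t) as Hd.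
    assert (phi t < phi 0).
    { apply Hd; try lra.
      - intros c Hc. apply Derive_correct, D1.
      - intros c Hc. apply Hall; lra. }
    pose proof (Hmin t). lra. }
  assert (Pinc : forall x y, 0 <= x -> x < y -> y <= tau / 2 -> phi x < phi y).
  { intros x y Hx Hxy Hy. apply (incr_of_deriv phi (Derive phi) 0 (tau / 2));
    [intros c Hc; apply Derive_correct, D1 | intros c Hc; apply Ppos; auto | lra | lra | lra]. }
  assert (gdec : forall x y, 0 <= x -> x < y -> y <= tau / 2 -> g y < g x).
  { intros x y Hx Hxy Hy. unfold g. apply WW1_decr; auto.
    - destruct (Bas x) as [_ [_ [? _]]]; auto.
    - apply tan_lt; auto. }
  assert (g0 : 0 < g 0) by (unfold g; auto).
  assert (gh : g (tau / 2) < 0).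
  { unfold g. destruct (proj1 (Hz (tau / 2)) Ph) as [E|E].
    - exfalso. pose proof (Pinc 0 (tau/2) ltac:(lra) ltac:(lra) ltac:(lra)) as Q.
      pose proof (tan_lt _ _ (Hr 0) (Hr (tau/2)) Q). lra.
    - rewrite E; auto. }
  assert (gc : continuity g).
  { apply cont_glob. intros t. unfold g. destruct (Bas t) as [Hc [_ [Ht _]]]. auto_derive.
    repeat split; [apply ex_WW1; auto| apply ex_tan; lra | apply D1]. }
  destruct (IVT_gen g 0 (tau / 2) 0 gc) as [z1 [Hz1 Ez1]].
  { rewrite Rmin_right, Rmax_left by lra. lra. }
  rewrite Rmin_left, Rmax_right in Hz1 by lra.
  assert (Hz1' : 0 < z1 < tau / 2).
  { split; destruct (Req_dec z1 0); destruct (Req_dec z1 (tau/2)); subst; try lra. }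
  assert (gsym : forall t, g (tau - t) = g t).
  { intros t. unfold g. f_equal. f_equal. rewrite <- (Hsym 1%Z t). f_equal. simpl. ring. }
  exists z1, (tau - z1). split; auto. split; [lra|]. split; [apply Dag; auto|].
  split; [apply Dag; rewrite gsym; auto|].
  intros z Hz0 Ez. apply Dag in Ez.
  assert (uniq : forall x, 0 <= x <= tau / 2 -> g x = 0 -> x = z1).
  { intros x Hx Ex. destruct (Rtotal_order x z1) as [Hl|[He|Hg]]; auto.
    - pose proof (gdec x z1 ltac:(lra) Hl ltac:(lra)) as Q. lra.
    - pose proof (gdec z1 x ltac:(lra) Hg ltac:(lra)) as Q. lra. }
  destruct (Rle_lt_dec z (tau / 2)).
  - left. apply uniq; auto; lra.
  - right. assert (tau - z = z1) by (apply uniq; [lra| rewrite gsym; auto]). lra.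
Qed.


Ltac exd12 D1 D2 :=
  repeat match goal with
  | |- _ /\ _ => split
  | |- True => exact I
  | |- ex_derive (fun x : R => Derive _ x) _ => apply D2
  | |- ex_derive (fun x : R => _ x) _ => apply D1
  end.

Lemma d_r (phi : R -> R) : (forall t, ex_derive phi t) -> forall t,
  Derive (prof_r phi) t = exp t * sin (phi t) + exp t * (cos (phi t) * Derive phi t).
Proof.
  intros D1 t. apply is_derive_unique. unfold prof_r. auto_derive.
  - exd12 D1 D1.
  - eta_fix. ring.
Qed.

Lemma d_y (phi : R -> R) : (forall t, ex_derive phi t) -> forall t,
  Derive (prof_y phi) t = exp t * cos (phi t) - exp t * (sin (phi t) * Derive phi t).
Proof.
  intros D1 t. apply is_derive_unique. unfold prof_y. auto_derive.
  - exd12 D1 D1.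
  - eta_fix. ring.
Qed.

Lemma dd_r (phi : R -> R) : (forall t, ex_derive phi t) -> (forall t, ex_derive (Derive phi) t) -> forall t,
  Derive (Derive (prof_r phi)) t = exp t * (sin (phi t) + 2 * cos (phi t) * Derive phi t
     - sin (phi t) * Derive phi t ^ 2 + cos (phi t) * Derive (Derive phi) t).
Proof.
  intros D1 D2 t. rewrite (Derive_ext _ _ t (d_r phi D1)). apply is_derive_unique. auto_derive.
  - exd12 D1 D2.
  - eta_fix. ring.
Qed.

Lemma dd_y (phi : R -> R) : (forall t, ex_derive phi t) -> (forall t, ex_derive (Derive phi) t) -> forall t,
  Derive (Derive (prof_y phi)) t = exp t * (cos (phi t) - 2 * sin (phi t) * Derive phi t
     - cos (phi t) * Derive phi t ^ 2 - sin (phi t) * Derive (Derive phi) t).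
Proof.
  intros D1 D2 t. rewrite (Derive_ext _ _ t (d_y phi D1)). apply is_derive_unique. auto_derive.
  - exd12 D1 D2.
  - eta_fix. ring.
Qed.

Lemma speed_eq (phi : R -> R) : (forall t, ex_derive phi t) -> forall t,
  speed phi t = exp t * sqrt (1 + Derive phi t ^ 2).
Proof.
  intros D1 t. unfold speed. rewrite d_r, d_y by auto.
  replace ((exp t * sin (phi t) + exp t * (cos (phi t) * Derive phi t)) ^ 2 +
           (exp t * cos (phi t) - exp t * (sin (phi t) * Derive phi t)) ^ 2)
    with (exp t ^ 2 * (1 + Derive phi t ^ 2)).
  2:{ pose proof (sin2_cos2 (phi t)). unfold Rsqr in H. 
      replace (1 + Derive phi t ^ 2) with ((sin (phi t) * sin (phi t) + cos (phi t) * cos (phi t)) + (sin (phi t) * sin (phi t) + cos (phi t) * cos (phi t)) * Derive phi t ^ 2) by (rewrite H; ring).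
      ring. }
  rewrite sqrt_mult by (try apply pow2_ge_0; pose proof (pow2_ge_0 (Derive phi t)); lra).
  rewrite sqrt_pow2; auto. left; apply exp_pos.
Qed.

Lemma kappa1_alg e C S P P2 Q X V V1 W W1 : 0 < e -> 0 < C -> 0 < V -> 0 < Q ->
  S = X * C -> C ^ 2 * (1 + X ^ 2) = 1 -> C * Q = / V -> Q ^ 2 = 1 + P ^ 2 -> S ^ 2 + C ^ 2 = 1 ->
  2 * P2 * V ^ 2 + 2 * P ^ 2 * V * V1 * (1 + X ^ 2) - W1 * (1 + X ^ 2) = 0 ->
  P ^ 2 * V ^ 2 = W -> W1 = 2 * X - 2 * V * V1 -> W = 1 + X ^ 2 - V ^ 2 ->
  e * C * ((e * S + e * (C * P)) * (e * (C - 2 * S * P - C * P ^ 2 - S * P2)) -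
           (e * C - e * (S * P)) * (e * (S + 2 * C * P - S * P ^ 2 + C * P2))) / (e * Q) ^ 3 +
  (e * S + e * (C * P)) / (e * Q) = V1.
Proof.
  intros He HC HV HQ HS Hc HCQ HQ2 HSC HE HPW HW1 HW.
  assert (N : (e * S + e * (C * P)) * (e * (C - 2 * S * P - C * P ^ 2 - S * P2)) -
           (e * C - e * (S * P)) * (e * (S + 2 * C * P - S * P ^ 2 + C * P2)) =
           - e ^ 2 * (S ^ 2 + C ^ 2) * (P + P ^ 3 + P2)) by ring.
  rewrite N, HSC.
  assert (St1 : e * C * (- e ^ 2 * 1 * (P + P ^ 3 + P2)) / (e * Q) ^ 3 + (e * S + e * (C * P)) / (e * Q)
     = (- C * (P + P ^ 3 + P2) + (S + C * P) * Q ^ 2) / Q ^ 3) by (field; repeat split; lra).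
  rewrite St1. rewrite HQ2.
  replace (- C * (P + P ^ 3 + P2) + (S + C * P) * (1 + P ^ 2)) with (S * (1 + P^2) - C * P2) by ring.
  rewrite <- HQ2.
  assert (HQ' : Q = / (C * V)) by (apply (Rmult_eq_reg_l C); [rewrite HCQ; field; lra | lra]).
  assert (HP2 : P2 = (1 + X^2) * (W1 * V - 2 * W * V1) / (2 * V ^ 3)).
  { assert (HE' : 2 * P2 * V ^ 2 = W1 * (1 + X ^ 2) - 2 * P ^ 2 * V * V1 * (1 + X ^ 2)) by lra.
    rewrite <- HPW. apply (Rmult_eq_reg_r (2 * V ^ 2)); [|apply Rgt_not_eq; apply Rmult_lt_0_compat; [lra|apply pow_lt; lra]].
    replace (P2 * (2 * V ^ 2)) with (2 * P2 * V ^ 2) by ring. rewrite HE'. field. lra. }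
  rewrite HQ', HS, HP2.
  assert (E1 : (X * C * (/ (C * V)) ^ 2 - C * ((1 + X ^ 2) * (W1 * V - 2 * W * V1) / (2 * V ^ 3))) / (/ (C * V)) ^ 3
    = X * C^2 * V - C ^ 4 * (1 + X ^ 2) * (W1 * V - 2 * W * V1) / 2) by (field; repeat split; lra).
  rewrite E1.
  set (u := C ^ 2 * (1 + X ^ 2)) in Hc.
  assert (Z : X * C^2 * V - C ^ 4 * (1 + X ^ 2) * (W1 * V - 2 * W * V1) / 2 - V1
     = (C ^ 2 * (1 + X ^ 2) - 1) * (- (C ^ 2 * (1 + X ^ 2)) * X * V / (1 + X ^ 2) + (C ^ 2 * (1 + X ^ 2) + 1) * V1)).
  { rewrite HW1, HW. field. nra. }
  fold u in Z. rewrite Hc in Z. lra.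
Qed.

Lemma kappa2_alg e C S P Q X V : 0 < e -> 0 < C -> 0 < S -> 0 < V -> 0 < X ->
  S = X * C -> C * Q = / V -> S ^ 2 + C ^ 2 = 1 ->
  (e * C * (e * C - e * (S * P)) / (e * S) + (e * S + e * (C * P))) / (e * Q) = V / X.
Proof.
  intros He HC HS HV HX HSX HCQ HSC.
  assert (HQ' : Q = / (C * V)) by (apply (Rmult_eq_reg_l C); [rewrite HCQ; field; lra | lra]).
  rewrite HQ'.
  assert (E : (e * C * (e * C - e * (S * P)) / (e * S) + (e * S + e * (C * P))) / (e * / (C * V))
     = (S ^ 2 + C ^ 2) * C * V / S) by (field; repeat split; lra).
  rewrite E, HSC, HSX. field. lra.
Qed.

Lemma final_alg k mu H C X P : 0 < C -> 0 < X -> 0 < mu -> 0 < H -> C ^ 2 * (1 + X ^ 2) = 1 ->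
  - / (/ (C ^ 2 * vv k mu H X) * X ^ S k) *
    (INR (S k) * X ^ k * ((X ^ 2 + 1) * P) * WW1 k mu H X / 2 + X ^ S k * (WW2 k mu H X * ((X ^ 2 + 1) * P)) / 2)
  - (vv1 k mu H X ^ 2 + INR (S k) * (vv k mu H X / X) ^ 2 - INR (S (S k))) * (P * vv k mu H X) = 0.
Proof.
  intros HC HX Hmu HH Hc.
  assert (HV : 0 < vv k mu H X) by (apply vv_pos; auto).
  assert (HXk : 0 < X ^ k) by (apply pow_lt; auto).
  set (T1 := - vv k mu H X / X ^ S k * (INR (S k) * X ^ k * P * WW1 k mu H X / 2 + X ^ S k * (WW2 k mu H X * P) / 2)).
  set (T2 := (vv1 k mu H X ^ 2 + INR (S k) * (vv k mu H X / X) ^ 2 - INR (S (S k))) * (P * vv k mu H X)).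
  assert (E : - / (/ (C ^ 2 * vv k mu H X) * X ^ S k) *
    (INR (S k) * X ^ k * ((X ^ 2 + 1) * P) * WW1 k mu H X / 2 + X ^ S k * (WW2 k mu H X * ((X ^ 2 + 1) * P)) / 2)
     = C ^ 2 * (1 + X ^ 2) * T1).
  { unfold T1. simpl. field. repeat split; lra. }
  rewrite E, Hc. unfold T1, T2, WW1, WW2, vv, vv1, vv2. rewrite !S_INR. simpl. field. split; lra.
Qed.

Lemma hyp_metA k H mu phi tau : Hyp k H mu phi tau -> forall t,
  metA phi t = / (cos (phi t) ^ 2 * vv k mu H (tan (phi t))).
Proof.
  intros Hy t. pose proof (hyp_d1 _ _ _ _ _ Hy) as D1.
  destruct (hyp_basic _ _ _ _ _ Hy t) as [Hc [Hs [Ht _]]].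
  destruct (hyp_alg _ _ _ _ _ Hy t) as [E _].
  assert (HV : 0 < vv k mu H (tan (phi t))) by (destruct Hy as [? [? _]]; apply vv_pos; lra).
  unfold metA. rewrite speed_eq by auto. unfold prof_y.
  assert (HQ : sqrt (1 + Derive phi t ^ 2) = / (cos (phi t) * vv k mu H (tan (phi t)))).
  { apply (Rmult_eq_reg_l (cos (phi t))); [rewrite E; field; lra | lra]. }
  rewrite HQ. field. pose proof (exp_pos t). repeat split; lra.
Qed.

Lemma hyp_warp k H mu phi tau : Hyp k H mu phi tau -> forall t, warp phi t = tan (phi t).
Proof.
  intros Hy t. destruct (hyp_basic _ _ _ _ _ Hy t) as [Hc _].
  unfold warp, prof_r, prof_y, tan. field. pose proof (exp_pos t). lra.
Qed.

Lemma hyp_inner k H mu phi tau : Hyp k H mu phi tau -> forall s,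
  warp phi s ^ S k * Derive (a_fun phi) s / metA phi s = tan (phi s) ^ S k * WW1 k mu H (tan (phi s)) / 2.
Proof.
  intros Hy s. rewrite (hyp_warp _ _ _ _ _ Hy), (hyp_metA _ _ _ _ _ Hy), (hyp_Da _ _ _ _ _ Hy).
  destruct (hyp_basic _ _ _ _ _ Hy s) as [Hc [Hs [Ht [Hct _]]]].
  assert (HV : 0 < vv k mu H (tan (phi s))) by (destruct Hy as [? [? _]]; apply vv_pos; lra).
  replace (tan (phi s) ^ S k * ((1 + tan (phi s) ^ 2) * WW1 k mu H (tan (phi s)) / (2 * vv k mu H (tan (phi s)))) /
   / (cos (phi s) ^ 2 * vv k mu H (tan (phi s))))
   with (cos (phi s) ^ 2 * (1 + tan (phi s) ^ 2) * (tan (phi s) ^ S k * WW1 k mu H (tan (phi s)) / 2))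
   by (field; repeat split; lra).
  rewrite Hct. ring.
Qed.

Lemma hyp_Dinner k H mu phi tau : Hyp k H mu phi tau -> forall t,
  Derive (fun s => warp phi s ^ S k * Derive (a_fun phi) s / metA phi s) t =
  INR (S k) * tan (phi t) ^ k * ((tan (phi t) ^ 2 + 1) * Derive phi t) * WW1 k mu H (tan (phi t)) / 2
  + tan (phi t) ^ S k * (WW2 k mu H (tan (phi t)) * ((tan (phi t) ^ 2 + 1) * Derive phi t)) / 2.
Proof.
  intros Hy t. rewrite (Derive_ext _ _ t (hyp_inner _ _ _ _ _ Hy)).
  pose proof (hyp_d1 _ _ _ _ _ Hy) as D1.
  destruct (hyp_basic _ _ _ _ _ Hy t) as [Hc [Hs [Ht _]]].
  apply is_derive_unique. auto_derive.
  - repeat match goal with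
    | |- _ /\ _ => split
    | |- True => exact I
    | |- ex_derive (fun x : R => WW1 _ _ _ x) _ => apply ex_WW1; auto
    | |- ex_derive (fun x : R => tan x) _ => apply ex_tan; lra
    | |- ex_derive (fun x : R => _ x) _ => apply D1
    end.
  - rewrite !Derive_eta, D_WW1, D_tan by lra. eta_fix.
    change (match k with 0%nat => 1 | S _ => INR k + 1 end) with (INR (S k)).
    change (tan (phi t) ^ S k) with (tan (phi t) * tan (phi t) ^ k). field.
Qed.

Lemma hyp_kappa1 k H mu phi tau : Hyp k H mu phi tau -> forall t,
  kappa1 phi t = vv1 k mu H (tan (phi t)).
Proof.
  intros Hy t.
  pose proof (hyp_d1 _ _ _ _ _ Hy) as D1. pose proof (hyp_d2 _ _ _ _ _ Hy) as D2.
  destruct (hyp_basic _ _ _ _ _ Hy t) as [Hc [Hs [Ht [Hct HSX]]]].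
  destruct (hyp_alg _ _ _ _ _ Hy t) as [Alg1 Alg2].
  pose proof (hyp_E0 _ _ _ _ _ Hy t) as E0. unfold Efun in E0.
  assert (HV : 0 < vv k mu H (tan (phi t))) by (destruct Hy as [? [? _]]; apply vv_pos; lra).
  unfold kappa1. cbv zeta.
  rewrite (dd_r phi D1 D2), (dd_y phi D1 D2), (d_r phi D1), (d_y phi D1), (speed_eq phi D1).
  unfold prof_y.
  apply (kappa1_alg (exp t) (cos (phi t)) (sin (phi t)) (Derive phi t) (Derive (Derive phi) t)
     (sqrt (1 + Derive phi t ^ 2)) (tan (phi t)) (vv k mu H (tan (phi t))) (vv1 k mu H (tan (phi t)))
     (WW k mu H (tan (phi t))) (WW1 k mu H (tan (phi t)))); auto.
  - apply exp_pos.
  - apply sqrt_lt_R0. pose proof (pow2_ge_0 (Derive phi t)). lra.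
  - apply pow2_sqrt. pose proof (pow2_ge_0 (Derive phi t)). lra.
  - pose proof (sin2_cos2 (phi t)). unfold Rsqr in H0. simpl. lra.
Qed.

Lemma hyp_kappa2 k H mu phi tau : Hyp k H mu phi tau -> forall t,
  kappa2 phi t = vv k mu H (tan (phi t)) / tan (phi t).
Proof.
  intros Hy t.
  pose proof (hyp_d1 _ _ _ _ _ Hy) as D1.
  destruct (hyp_basic _ _ _ _ _ Hy t) as [Hc [Hs [Ht [Hct HSX]]]].
  destruct (hyp_alg _ _ _ _ _ Hy t) as [Alg1 Alg2].
  assert (HV : 0 < vv k mu H (tan (phi t))) by (destruct Hy as [? [? _]]; apply vv_pos; lra).
  unfold kappa2. cbv zeta.
  rewrite (d_r phi D1), (d_y phi D1), (speed_eq phi D1).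
  unfold prof_y, prof_r.
  apply (kappa2_alg (exp t) (cos (phi t)) (sin (phi t)) (Derive phi t)
     (sqrt (1 + Derive phi t ^ 2)) (tan (phi t)) (vv k mu H (tan (phi t)))); auto.
  - apply exp_pos.
  - pose proof (sin2_cos2 (phi t)). unfold Rsqr in H0. simpl. lra.
Qed.

Lemma hyp_part1 k H mu phi tau : Hyp k H mu phi tau -> forall t,
  lapLB (S (S k)) phi (a_fun phi) t - Vpot (S (S k)) phi t * a_fun phi t = 0.
Proof.
  intros Hy t.
  unfold lapLB, Vpot, normB2.
  change (S (S k) - 1)%nat with (S k).
  rewrite (hyp_Dinner _ _ _ _ _ Hy), (hyp_metA _ _ _ _ _ Hy), (hyp_warp _ _ _ _ _ Hy),
    (hyp_kappa1 _ _ _ _ _ Hy), (hyp_kappa2 _ _ _ _ _ Hy), (hyp_afun _ _ _ _ _ Hy).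
  destruct (hyp_basic _ _ _ _ _ Hy t) as [Hc [Hs [Ht [Hct HSX]]]].
  destruct Hy as [HH [Hmu _]].
  apply final_alg; auto; lra.
Qed.


Theorem lemma3p5 (n : nat) (H mu : R) (phi : R -> R) (tau : R) :
  (2 <= n)%nat -> 1 < H -> 0 < mu ->
  (forall (k : nat) (t : R), ex_derive_n phi k t) ->
  (forall t, 0 < phi t < PI / 2) ->
  unduloid_eq n H mu phi ->
  0 < tau ->
  (forall t, phi (t + tau) = phi t) ->
  (forall s, 0 < s < tau -> exists t, phi (t + s) <> phi t) ->
  (forall (k : Z) (t : R), phi (IZR k * tau - t) = phi t) ->
  (exists t1 t2, phi t1 <> phi t2) ->
  (forall t, phi 0 <= phi t) ->
  (forall t, lapLB n phi (a_fun phi) t - Vpot n phi t * a_fun phi t = 0)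
  /\ (forall t, a_fun phi t = 0 <-> exists k : Z, t = IZR k * tau / 2)
  /\ (exists z1 z2 : R,
        0 < z1 < tau / 2 /\ tau / 2 < z2 < tau /\
        Derive (a_fun phi) z1 = 0 /\ Derive (a_fun phi) z2 = 0 /\
        (forall z, 0 <= z <= tau -> Derive (a_fun phi) z = 0 -> z = z1 \/ z = z2)).
Proof.
  intros Hn HH Hmu Hd Hr Hode Htau Hper Hminp Hsym Hnc Hmin.
  destruct n as [|[|k]]; try lia.
  assert (Hy : Hyp k H mu phi tau).
  { unfold Hyp. split; [lra|]. split; [lra|]. split; [exact Hd|]. split; [exact Hr|].
    split; [intros u; exact (Hode u)|]. split; [lra|]. split; [exact Hminp|].
    split; [exact Hsym|]. split; [exact Hnc|exact Hmin]. }
  split; [apply (hyp_part1 _ _ _ _ _ Hy)|].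
  split; [|apply (hyp_part3 _ _ _ _ _ Hy)].
  intros t. rewrite (hyp_afun _ _ _ _ _ Hy). rewrite <- (hyp_zeros _ _ _ _ _ Hy).
  destruct (hyp_basic _ _ _ _ _ Hy t) as [_ [_ [Ht _]]].
  assert (0 < vv k mu H (tan (phi t))) by (apply vv_pos; lra).
  split; intros E.
  - apply Rmult_integral in E. destruct E; auto; lra.
  - rewrite E; ring.
Qed.
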